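(* Let $c=\min_{x\in\partial D}\phi(x;p,p')$ (so $c>|p-p'|$), fix $0<s<\eta'$, let $q\in\Lambda_{\partial D}(p,p')$ and $A'=\frac{q-p'}{|q-p'|}$. Then $\Lambda_{\partial D}(p,p'+sA')=\{q\}$. Moreover, if in addition $s<\frac12(c-|p-p'|)$, then $S_q\big(E_{c-s}(p,p'+sA')\big)-S_q(\partial D)$ is positive definite on the common tangent plane $T_q(\partial D)=T_q(E_{c-s}(p,p'+sA'))=T_q(E_c(p,p'))$.
   Context: Let $D\subset\mathbb R^3$ be a nonempty bounded open set with $C^2$ boundary; $\nu_q$ is the unit outward normal. $p,p'\in\mathbb R^3\setminus\overline D$ with $[p,p']\cap\overline D=\emptyset$; $B'$ is the open ball with center $p'$ and radius $\eta'$, $\overline{B'}\cap\overline D=\emptyset$. $\phi(x;y,y')=|y-x|+|x-y'|$; $E_c(p,p')=\{x:\phi(x;p,p')=c\}$; $\Lambda_{\partial D}(p,p')=\{q\in\partial D:\phi(q;p,p')=\min_{x\in\partial D}\phi(x;p,p')\}$. Shape operators $S_q(\cdot)$ are taken at $q$ with respect to $\nu_q$ ($S_q(v)=-D_vN$). *)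

(* Defs.v *)
From Stdlib Require Import Reals Lra.
Open Scope R_scope.

Definition R3 : Type := (R * R * R)%type.

Definition vzero : R3 := (0, 0, 0).
Definition vadd (u v : R3) : R3 :=
  let '(u1, u2, u3) := u in let '(v1, v2, v3) := v in (u1 + v1, u2 + v2, u3 + v3).
Definition vscal (a : R) (u : R3) : R3 :=
  let '(u1, u2, u3) := u in (a * u1, a * u2, a * u3).
Definition vsub (u v : R3) : R3 := vadd u (vscal (-1) v).
Definition dot (u v : R3) : R :=
  let '(u1, u2, u3) := u in let '(v1, v2, v3) := v in u1 * v1 + u2 * v2 + u3 * v3.
Definition vnorm (u : R3) : R := sqrt (dot u u).

Definition ball (c : R3) (r : R) (x : R3) : Prop := vnorm (vsub x c) < r.
Definition closed_ball (c : R3) (r : R) (x : R3) : Prop := vnorm (vsub x c) <= r.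
Definition is_open (U : R3 -> Prop) : Prop :=
  forall x, U x -> exists r, 0 < r /\ forall y, ball x r y -> U y.
Definition is_bounded (U : R3 -> Prop) : Prop :=
  exists M, forall x, U x -> vnorm x <= M.
Definition closure (U : R3 -> Prop) (x : R3) : Prop :=
  forall r, 0 < r -> exists y, U y /\ ball x r y.
Definition boundary (U : R3 -> Prop) (x : R3) : Prop :=
  closure U x /\ closure (fun y => ~ U y) x.

Definition segment (a b : R3) (x : R3) : Prop :=
  exists t, 0 <= t <= 1 /\ x = vadd a (vscal t (vsub b a)).

Definition is_linear (L : R3 -> R3) : Prop :=
  (forall u v, L (vadd u v) = vadd (L u) (L v)) /\
  (forall a u, L (vscal a u) = vscal a (L u)).

Definition has_grad (f : R3 -> R) (x g : R3) : Prop :=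
  forall eps, 0 < eps -> exists del, 0 < del /\
    forall h, vnorm h < del ->
      Rabs (f (vadd x h) - f x - dot g h) <= eps * vnorm h.

Definition has_deriv (F : R3 -> R3) (x : R3) (L : R3 -> R3) : Prop :=
  is_linear L /\
  forall eps, 0 < eps -> exists del, 0 < del /\
    forall h, vnorm h < del ->
      vnorm (vsub (vsub (F (vadd x h)) (F x)) (L h)) <= eps * vnorm h.

Definition cont_on (U : R3 -> Prop) (F : R3 -> R3) : Prop :=
  forall x, U x -> forall eps, 0 < eps -> exists del, 0 < del /\
    forall y, U y -> vnorm (vsub y x) < del -> vnorm (vsub (F y) (F x)) < eps.

Definition C2_on (U : R3 -> Prop) (F : R3 -> R) (G : R3 -> R3) : Prop :=
  (forall x, U x -> has_grad F x (G x)) /\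
  exists DG : R3 -> R3 -> R3,
    (forall x, U x -> has_deriv G x (DG x)) /\
    (forall v, cont_on U (fun x => DG x v)).

Definition local_def_fn (D : R3 -> Prop) (q : R3) (r : R) (F : R3 -> R) (G : R3 -> R3)
  : Prop :=
  0 < r /\ C2_on (ball q r) F G /\
  (forall x, ball q r x -> G x <> vzero) /\
  (forall x, ball q r x -> (D x <-> F x < 0)).

Definition C2_boundary (D : R3 -> Prop) : Prop :=
  forall q, boundary D q -> exists r F G, local_def_fn D q r F G.

Definition outward_normal (D : R3 -> Prop) (q n : R3) : Prop :=
  boundary D q /\
  exists r F G, local_def_fn D q r F G /\ n = vscal (/ vnorm (G q)) (G q).

Definition local_level (M : R3 -> Prop) (q : R3) (r : R) (F : R3 -> R) (G : R3 -> R3)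
  : Prop :=
  0 < r /\ C2_on (ball q r) F G /\
  (forall x, ball q r x -> G x <> vzero) /\
  (forall x, ball q r x -> (M x <-> F x = 0)).

Definition tangent_plane (M : R3 -> Prop) (q v : R3) : Prop :=
  M q /\ exists r F G, local_level M q r F G /\ dot (G q) v = 0.

(* S is (a linear map whose restriction to T_q(M) is) the shape operator of M at q
   with respect to the unit normal n: S(v) = - D_v N, where N is the unit normal
   field of M near q with N(q) = n. *)
Definition shape_op (M : R3 -> Prop) (q n : R3) (S : R3 -> R3) : Prop :=
  M q /\ exists r F G, local_level M q r F G /\
    exists sg, (sg = 1 \/ sg = -1) /\
      let N := fun x => vscal (sg / vnorm (G x)) (G x) in
      N q = n /\ has_deriv N q (fun v => vscal (-1) (S v)).

Definition phi (x y y' : R3) : R := vnorm (vsub y x) + vnorm (vsub x y').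

Definition ellipsoid (c : R) (y y' : R3) (x : R3) : Prop := phi x y y' = c.

Definition Lambda (D : R3 -> Prop) (y y' : R3) (q : R3) : Prop :=
  boundary D q /\ forall x, boundary D x -> phi q y y' <= phi x y y'.

(* Main.v *)
Require Import Defs.
From Stdlib Require Import Reals.
From Stdlib Require Import Lra Psatz.
Open Scope R_scope.

Ltac vdes := repeat match goal with
  | u : R3 |- _ => let a := fresh "a" in let b := fresh "b" in let c := fresh "c" in
                   destruct u as [[a b] c]
  end.
Ltac vunf := unfold vsub, vadd, vscal, dot, vzero in *.

Lemma dot_comm u v : dot u v = dot v u.
Proof. vdes; vunf; ring. Qed.
Lemma dot_addl u v w : dot (vadd u v) w = dot u w + dot v w.
Proof. vdes; vunf; ring. Qed.
Lemma dot_addr u v w : dot w (vadd u v) = dot w u + dot w v.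
Proof. vdes; vunf; ring. Qed.
Lemma dot_subl u v w : dot (vsub u v) w = dot u w - dot v w.
Proof. vdes; vunf; ring. Qed.
Lemma dot_subr u v w : dot w (vsub u v) = dot w u - dot w v.
Proof. vdes; vunf; ring. Qed.
Lemma dot_scall a u w : dot (vscal a u) w = a * dot u w.
Proof. vdes; vunf; ring. Qed.
Lemma dot_scalr a u w : dot w (vscal a u) = a * dot w u.
Proof. vdes; vunf; ring. Qed.
Lemma dot_ge0 u : 0 <= dot u u.
Proof. vdes; vunf; nra. Qed.
Lemma dot_eq0 u : dot u u = 0 -> u = vzero.
Proof. vdes; vunf; intros H.
  assert (a = 0) by nra. assert (b = 0) by nra. assert (c = 0) by nra. subst; reflexivity. Qed.
Lemma dot_zero_l u : dot vzero u = 0.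
Proof. vdes; vunf; ring. Qed.
Lemma dot_zero_r u : dot u vzero = 0.
Proof. vdes; vunf; ring. Qed.

Lemma vnorm_ge0 u : 0 <= vnorm u.
Proof. apply sqrt_pos. Qed.
Lemma vnorm_sq u : vnorm u * vnorm u = dot u u.
Proof. apply sqrt_sqrt, dot_ge0. Qed.
Lemma vnorm_zero : vnorm vzero = 0.
Proof. unfold vnorm. rewrite dot_zero_l. apply sqrt_0. Qed.
Lemma vnorm_eq0 u : vnorm u = 0 -> u = vzero.
Proof. intros H. apply dot_eq0. rewrite <- vnorm_sq, H. ring. Qed.
Lemma vnorm_pos u : u <> vzero -> 0 < vnorm u.
Proof. intros H. destruct (vnorm_ge0 u) as [H1|H1]; auto. symmetry in H1. apply vnorm_eq0 in H1. tauto. Qed.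

Lemma abs_le_of_sq x y : 0 <= y -> x * x <= y * y -> Rabs x <= y.
Proof. intros Hy H. unfold Rabs; destruct (Rcase_abs x); nra. Qed.
Lemma le_of_sq x y : 0 <= y -> x * x <= y * y -> x <= y.
Proof. intros Hy H. nra. Qed.
Lemma sq_le_of_le x y : 0 <= x -> x <= y -> x * x <= y * y.
Proof. intros; nra. Qed.

Lemma CS_sq u v : dot u v * dot u v <= dot u u * dot v v.
Proof. destruct u as [[x1 x2] x3], v as [[y1 y2] y3]; vunf.
  assert (H: (x1*x1+x2*x2+x3*x3)*(y1*y1+y2*y2+y3*y3) - (x1*y1+x2*y2+x3*y3)*(x1*y1+x2*y2+x3*y3)
   = (x1*y2-x2*y1)*(x1*y2-x2*y1) + (x1*y3-x3*y1)*(x1*y3-x3*y1) + (x2*y3-x3*y2)*(x2*y3-x3*y2)) by ring.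
  assert (0 <= (x1*y2-x2*y1)*(x1*y2-x2*y1) + (x1*y3-x3*y1)*(x1*y3-x3*y1) + (x2*y3-x3*y2)*(x2*y3-x3*y2)).
  { pose proof (Rle_0_sqr (x1*y2-x2*y1)); pose proof (Rle_0_sqr (x1*y3-x3*y1)); pose proof (Rle_0_sqr (x2*y3-x3*y2)); unfold Rsqr in *; lra. }
  lra. Qed.
Lemma CS u v : Rabs (dot u v) <= vnorm u * vnorm v.
Proof. apply abs_le_of_sq. apply Rmult_le_pos; apply vnorm_ge0.
  replace (vnorm u * vnorm v * (vnorm u * vnorm v)) with ((vnorm u * vnorm u) * (vnorm v * vnorm v)) by ring.
  rewrite !vnorm_sq. apply CS_sq. Qed.
Lemma CS' u v : dot u v <= vnorm u * vnorm v.
Proof. eapply Rle_trans; [apply Rle_abs| apply CS]. Qed.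

Lemma dot_vadd_self u v : dot (vadd u v) (vadd u v) = dot u u + 2 * dot u v + dot v v.
Proof. vdes; vunf; ring. Qed.
Lemma vnorm_triangle u v : vnorm (vadd u v) <= vnorm u + vnorm v.
Proof. apply le_of_sq. pose proof (vnorm_ge0 u); pose proof (vnorm_ge0 v); lra.
  rewrite vnorm_sq, dot_vadd_self.
  pose proof (CS' u v). rewrite <- (vnorm_sq u), <- (vnorm_sq v). nra. Qed.

Lemma vnorm_scal a u : vnorm (vscal a u) = Rabs a * vnorm u.
Proof. unfold vnorm. rewrite dot_scall, dot_scalr.
  replace (a * (a * dot u u)) with ((a*a) * dot u u) by ring.
  rewrite sqrt_mult. fold (Rsqr a). rewrite sqrt_Rsqr_abs. reflexivity.
  nra. apply dot_ge0. Qed.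

Ltac vgen := repeat match goal with |- context [?t] =>
   match type of t with R3 => lazymatch t with
   | vadd _ _ => fail | vsub _ _ => fail | vscal _ _ => fail | (_,_,_) => fail | vzero => fail
   | _ => tryif is_var t then fail else (generalize t; intro) end end end.
Ltac vsplit := vgen; vdes; vunf; cbn -[Rplus Rmult Ropp Rinv Rminus Rdiv]; match goal with |- (?a,?b,?c) = (?d,?e,?f) => apply (f_equal2 pair); [apply (f_equal2 pair)|] end.
Ltac veq := vsplit; unfold Rdiv; ring.

Lemma vnorm_opp u : vnorm (vscal (-1) u) = vnorm u.
Proof. rewrite vnorm_scal. replace (Rabs (-1)) with 1. ring. rewrite Rabs_left by lra. ring. Qed.
Lemma vsub_anti a b : vsub a b = vscal (-1) (vsub b a).
Proof. veq. Qed.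
Lemma vnorm_sub_sym a b : vnorm (vsub a b) = vnorm (vsub b a).
Proof. rewrite vsub_anti, vnorm_opp. reflexivity. Qed.
Lemma vnorm_sub_tri a b c : vnorm (vsub a c) <= vnorm (vsub a b) + vnorm (vsub b c).
Proof. replace (vsub a c) with (vadd (vsub a b) (vsub b c)) by veq. apply vnorm_triangle. Qed.
Lemma vnorm_rev_tri u v : Rabs (vnorm u - vnorm v) <= vnorm (vsub u v).
Proof. pose proof (vnorm_sub_tri u v vzero). pose proof (vnorm_sub_tri v u vzero).
  replace (vsub u vzero) with u in * by veq. replace (vsub v vzero) with v in * by veq.
  rewrite (vnorm_sub_sym v u) in *. unfold Rabs; destruct Rcase_abs; lra. Qed.
Lemma vnorm_sub_le u v : vnorm (vsub u v) <= vnorm u + vnorm v.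
Proof. unfold vsub. eapply Rle_trans. apply vnorm_triangle. rewrite vnorm_opp. lra. Qed.

Lemma lin_zero L : is_linear L -> L vzero = vzero.
Proof. intros [Ha Hs]. pose proof (Hs 0 vzero) as H. replace (vscal 0 vzero) with vzero in H by veq. rewrite H. destruct (L vzero) as [[x y] z]. veq. Qed.
Lemma lin_sub L u v : is_linear L -> L (vsub u v) = vsub (L u) (L v).
Proof. intros [Ha Hs]. unfold vsub at 1. rewrite Ha, Hs. reflexivity. Qed.
Lemma lin_add L u v : is_linear L -> L (vadd u v) = vadd (L u) (L v).
Proof. intros [Ha Hs]. apply Ha. Qed.
Lemma lin_scal L a u : is_linear L -> L (vscal a u) = vscal a (L u).
Proof. intros [Ha Hs]. apply Hs. Qed.

Definition e1 : R3 := (1,0,0).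
Definition e2 : R3 := (0,1,0).
Definition e3 : R3 := (0,0,1).
Lemma comp_le (x y z : R) : Rabs x <= vnorm (x,y,z) /\ Rabs y <= vnorm (x,y,z) /\ Rabs z <= vnorm (x,y,z).
Proof. pose proof (vnorm_sq (x,y,z)) as H. pose proof (vnorm_ge0 (x,y,z)).
  unfold dot in H. repeat split; apply abs_le_of_sq; auto; nra. Qed.

Lemma lin_bound L : is_linear L -> exists K, 0 <= K /\ forall h, vnorm (L h) <= K * vnorm h.
Proof. intros HL. exists (vnorm (L e1) + vnorm (L e2) + vnorm (L e3)). split.
  pose proof (vnorm_ge0 (L e1)); pose proof (vnorm_ge0 (L e2)); pose proof (vnorm_ge0 (L e3)); lra.
  intros h. destruct h as [[x y] z].
  replace (x,y,z) with (vadd (vadd (vscal x e1) (vscal y e2)) (vscal z e3)) by (unfold e1,e2,e3; veq).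
  set (hh := vadd (vadd (vscal x e1) (vscal y e2)) (vscal z e3)).
  assert (Hh: hh = (x,y,z)) by (unfold hh, e1,e2,e3; veq). rewrite Hh.
  rewrite <- Hh at 1. unfold hh. rewrite !lin_add, !lin_scal by auto.
  destruct (comp_le x y z) as [Hx [Hy Hz]].
  eapply Rle_trans. apply vnorm_triangle. eapply Rle_trans. apply Rplus_le_compat_r. apply vnorm_triangle.
  rewrite !vnorm_scal.
  pose proof (vnorm_ge0 (L e1)); pose proof (vnorm_ge0 (L e2)); pose proof (vnorm_ge0 (L e3)).
  rewrite lin_scal, vnorm_scal by auto. nra. Qed.

Lemma dot_self_norm u : dot u u = vnorm u ^ 2.
Proof. rewrite <- vnorm_sq. ring. Qed.
Lemma vsub_add a b : vadd (vsub a b) b = a.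
Proof. veq. Qed.
Lemma vadd_sub a b : vadd a (vsub b a) = b.
Proof. veq. Qed.
Lemma abs_bounds x y : Rabs x <= y -> - y <= x /\ x <= y.
Proof. unfold Rabs; destruct Rcase_abs; intros; lra. Qed.
Lemma vscal_inv s u : s <> 0 -> vscal (/ s) (vscal s u) = u.
Proof. intros. vsplit; field; auto. Qed.
Lemma vscal_assoc a b u : vscal a (vscal b u) = vscal (a * b) u.
Proof. veq. Qed.
Lemma Rdiv_le_0_compat' a b : 0 <= a -> 0 < b -> 0 <= a / b.
Proof. intros. unfold Rdiv. apply Rmult_le_pos; auto. left; apply Rinv_0_lt_compat; auto. Qed.
Lemma vadd_sub_l a b : vsub (vadd a b) a = b.
Proof. veq. Qed.

Definition U (y : R3) : R3 := vscal (/ vnorm y) y.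
Definition DU (y d : R3) : R3 :=
  vsub (vscal (/ vnorm y) d) (vscal (dot y d / (vnorm y ^ 3)) y).

Lemma scal_bound1 a b s k : 0 <= a -> 0 < b -> 0 <= k -> a * a = b * b + 2 * s + k * k ->
  Rabs s <= b * k -> Rabs (a - b - s / b) <= 2 * k * k / b.
Proof. intros Ha Hb Hk Heq Hs.
  assert (Hab: Rabs (a - b) <= k).
  { assert (s <= b*k) by (eapply Rle_trans; [apply Rle_abs|exact Hs]).
    assert (- (b*k) <= s) by (pose proof (Rle_abs (-s)); rewrite Rabs_Ropp in H0; lra).
    assert (a <= b + k) by (apply le_of_sq; nra).
    assert (b - k <= a). { destruct (Rle_dec (b - k) 0). lra. apply le_of_sq; nra. }
    unfold Rabs; destruct Rcase_abs; lra. }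
  assert (Hid: (a - b - s / b) * (b * (a + b)) = s * (b - a) + b * (k * k)).
  { field_simplify; [|lra]. nra. }
  assert (Hpos: 0 < b * (a + b)) by nra.
  assert (H1: Rabs (a - b - s / b) * (b * (a + b)) <= 2 * b * (k*k)).
  { rewrite <- (Rabs_pos_eq (b * (a+b))) by lra. rewrite <- Rabs_mult, Hid.
    eapply Rle_trans. apply Rabs_triang. rewrite Rabs_mult, (Rabs_pos_eq (b*(k*k))) by nra.
    rewrite <- Rabs_Ropp, Ropp_minus_distr in Hab.
    assert (Rabs s * Rabs (b - a) <= (b*k) * k) by (apply Rmult_le_compat; auto using Rabs_pos).
    nra. }
  apply (Rmult_le_reg_r (b * (a + b))); auto.
  eapply Rle_trans. exact H1. unfold Rdiv. 
  assert (2 * k * k * / b * (b * (a + b)) = 2 * k * k * (a + b)) by (field; lra).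
  rewrite H. nra. Qed.

Lemma norm_expand y h : y <> vzero ->
  Rabs (vnorm (vadd y h) - vnorm y - dot (U y) h) <= 2 * vnorm h * vnorm h / vnorm y.
Proof. intros Hy. pose proof (vnorm_pos y Hy).
  unfold U. rewrite dot_scall.
  replace (/ vnorm y * dot y h) with (dot y h / vnorm y) by (unfold Rdiv; ring).
  apply scal_bound1; auto using vnorm_ge0.
  rewrite !vnorm_sq, dot_vadd_self. ring.
  apply CS. Qed.

Lemma U_norm y : y <> vzero -> vnorm (U y) = 1.
Proof. intros H. pose proof (vnorm_pos y H). unfold U. rewrite vnorm_scal.
  rewrite Rabs_pos_eq. field. lra. left; apply Rinv_0_lt_compat; lra. Qed.

Lemma dot_U_self y : y <> vzero -> dot (U y) y = vnorm y.
Proof. intros H. pose proof (vnorm_pos y H). unfold U. rewrite dot_scall, <- vnorm_sq. field. lra. Qed.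

Lemma abs_div_bound X P M : 0 < P -> Rabs (X * P) <= M -> Rabs X <= M / P.
Proof. intros HP H. rewrite Rabs_mult, (Rabs_pos_eq P) in H by lra.
  apply (Rmult_le_reg_r P); auto. unfold Rdiv. rewrite Rmult_assoc, Rinv_l by lra. lra. Qed.

Lemma norm_close y d : vnorm d <= vnorm y / 2 -> vnorm y / 2 <= vnorm (vadd y d) /\ Rabs (vnorm (vadd y d) - vnorm y) <= vnorm d.
Proof. intros H. pose proof (vnorm_rev_tri (vadd y d) y).
  replace (vsub (vadd y d) y) with d in H0 by veq. split; auto.
  unfold Rabs in H0; destruct Rcase_abs in H0; lra. Qed.

Lemma U_lip y d : y <> vzero -> vnorm d <= vnorm y / 2 ->
  vnorm (vsub (U (vadd y d)) (U y)) <= 4 * vnorm d / vnorm y.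
Proof. intros Hy Hd. pose proof (vnorm_pos y Hy) as Hb.
  destruct (norm_close y d Hd) as [Ha Hab].
  set (a := vnorm (vadd y d)) in *. set (b := vnorm y) in *. set (k := vnorm d) in *.
  assert (E: vsub (U (vadd y d)) (U y) = vadd (vscal (/a) d) (vscal (/a - /b) y)).
  { unfold U. fold a b. veq. }
  rewrite E. eapply Rle_trans. apply vnorm_triangle. rewrite !vnorm_scal. fold k b.
  assert (Hk: 0 <= k) by apply vnorm_ge0.
  rewrite Rabs_pos_eq by (left; apply Rinv_0_lt_compat; lra).
  assert (Rabs (/a - /b) <= k / (a*b)).
  { apply abs_div_bound. nra. replace ((/a - /b) * (a*b)) with (b - a) by (field; lra).
    rewrite <- Rabs_Ropp, Ropp_minus_distr. auto. }
  assert (Rabs (/ a - / b) * b <= k / a).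
  { eapply Rle_trans. apply Rmult_le_compat_r. lra. exact H. right. field. lra. }
  assert (k / a <= 2 * k / b).
  { unfold Rdiv. apply Rmult_le_reg_r with (a*b). nra.
    replace (k * / a * (a*b)) with (k*b) by (field; lra).
    replace (2 * k * / b * (a * b)) with (2*k*a) by (field; lra). nra. }
  replace (/a * k) with (k/a) by (unfold Rdiv; ring). lra. Qed.

Lemma U_second y d : y <> vzero -> vnorm d <= vnorm y / 2 ->
  vnorm (vsub (vsub (U (vadd y d)) (U y)) (DU y d)) <= 8 * (vnorm d * vnorm d) / (vnorm y * vnorm y).
Proof. intros Hy Hd. pose proof (vnorm_pos y Hy) as Hb.
  destruct (norm_close y d Hd) as [Ha Hab].
  pose proof (norm_expand y d Hy) as He.
  pose proof (CS y d) as Hs.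
  unfold U in He. rewrite dot_scall in He.
  set (a := vnorm (vadd y d)) in *. set (b := vnorm y) in *. set (k := vnorm d) in *.
  set (s := dot y d) in *.
  assert (Hk: 0 <= k) by apply vnorm_ge0.
  set (e := a - b - s / b) in *.
  replace (a - b - / b * s) with e in He by (unfold e, Rdiv; ring).
  assert (E: vsub (vsub (U (vadd y d)) (U y)) (DU y d) =
     vadd (vscal (/a - /b + s / b^3) y) (vscal (/a - /b) d)).
  { unfold U, DU. fold a b s. veq. }
  rewrite E. eapply Rle_trans. apply vnorm_triangle. rewrite !vnorm_scal. fold k b.
  assert (H1: Rabs (/ a - / b + s / b ^ 3) <= 3 * b * k * k / (a * b^3)).
  { apply abs_div_bound. apply Rmult_lt_0_compat; [lra| apply pow_lt; lra].
    replace ((/ a - / b + s / b ^ 3) * (a * b ^ 3)) with (s * (a - b) - e * b * b) by (unfold e; field; lra).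
    eapply Rle_trans. apply Rabs_triang. rewrite Rabs_Ropp, !Rabs_mult, (Rabs_pos_eq b) by lra.
    assert (Rabs s * Rabs (a - b) <= (b*k) * k) by (apply Rmult_le_compat; auto using Rabs_pos).
    assert (Rabs e * b * b <= (2 * k * k / b) * b * b) by (apply Rmult_le_compat_r; [lra|]; apply Rmult_le_compat_r; lra).
    replace (2 * k * k / b * b * b) with (2 * k * k * b) in H0 by (field; lra). nra. }
  assert (H2: Rabs (/a - /b) <= k / (a*b)).
  { apply abs_div_bound. nra. replace ((/a - /b) * (a*b)) with (b - a) by (field; lra).
    rewrite <- Rabs_Ropp, Ropp_minus_distr. auto. }
  assert (H3: Rabs (/ a - / b + s / b ^ 3) * b <= 6 * k * k / (b * b)).
  { eapply Rle_trans. apply Rmult_le_compat_r. lra. exact H1.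
    unfold Rdiv. apply Rmult_le_reg_r with (a*b^3). apply Rmult_lt_0_compat; [lra| apply pow_lt; lra].
    replace (3 * b * k * k * / (a * b ^ 3) * b * (a * b ^ 3)) with (3*b*b*k*k) by (field; lra).
    replace (6 * k * k * / (b * b) * (a * b ^ 3)) with (6 * a * b * k * k) by (field; lra).
    assert (0 <= k*k) by nra. nra. }
  assert (H4: Rabs (/a - /b) * k <= 2 * k * k / (b * b)).
  { eapply Rle_trans. apply Rmult_le_compat_r. lra. exact H2.
    unfold Rdiv. apply Rmult_le_reg_r with (a*b*b). { apply Rmult_lt_0_compat; [apply Rmult_lt_0_compat|]; lra. }
    replace (k * / (a * b) * k * (a * b * b)) with (b*k*k) by (field; lra).
    replace (2 * k * k * / (b * b) * (a * b * b)) with (2 * a * k * k) by (field; lra).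
    assert (0 <= k*k) by nra. nra. }
  replace (8 * (k * k) / (b * b)) with (6 * k * k / (b * b) + 2 * k * k / (b * b)) by (field; lra).
  lra. Qed.

Lemma DU_alt y v : y <> vzero -> DU y v = vscal (/ vnorm y) (vsub v (vscal (dot (U y) v) (U y))).
Proof. intros H. pose proof (vnorm_pos y H). unfold DU, U. rewrite dot_scall.
  set (b := vnorm y). assert (b <> 0) by (unfold b; lra). clearbody b. vsplit.
  all: field; auto. Qed.

Lemma DU_lin y : is_linear (DU y).
Proof. split; intros; unfold DU; rewrite ?dot_addr, ?dot_scalr; veq. Qed.

Lemma proj_bound u v : vnorm u = 1 -> vnorm (vsub v (vscal (dot u v) u)) <= 2 * vnorm v.
Proof. intros Hu. eapply Rle_trans. apply vnorm_sub_le. rewrite vnorm_scal, Hu.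
  pose proof (CS u v). rewrite Hu in H. lra. Qed.

Lemma DU_bound y w : y <> vzero -> vnorm (DU y w) <= 2 * vnorm w / vnorm y.
Proof. intros H. pose proof (vnorm_pos y H). rewrite DU_alt by auto. rewrite vnorm_scal.
  rewrite Rabs_pos_eq by (left; apply Rinv_0_lt_compat; lra).
  pose proof (proj_bound (U y) w (U_norm y H)). unfold Rdiv.
  rewrite Rmult_comm. apply Rmult_le_compat_r; auto. left; apply Rinv_0_lt_compat; lra. Qed.

Lemma DU_lip y d v : y <> vzero -> vnorm d <= vnorm y / 2 ->
  vnorm (vsub (DU (vadd y d) v) (DU y v)) <= 12 * vnorm d * vnorm v / (vnorm y * vnorm y).
Proof. intros Hy Hd. pose proof (vnorm_pos y Hy) as Hb.
  destruct (norm_close y d Hd) as [Ha Hab].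
  assert (Hz: vadd y d <> vzero). { intro E. rewrite E, vnorm_zero in Ha. lra. }
  pose proof (U_lip y d Hy Hd) as Hu.
  rewrite !DU_alt by auto.
  set (z := vadd y d) in *. set (u := U y) in *. set (u' := U z) in *.
  assert (Hun: vnorm u = 1) by (apply U_norm; auto).
  assert (Hun': vnorm u' = 1) by (apply U_norm; auto).
  set (a := vnorm z) in *. set (b := vnorm y) in *. set (k := vnorm d) in *.
  assert (Hk: 0 <= k) by apply vnorm_ge0. assert (Hv: 0 <= vnorm v) by apply vnorm_ge0.
  assert (E: vsub (vscal (/a) (vsub v (vscal (dot u' v) u'))) (vscal (/b) (vsub v (vscal (dot u v) u)))
     = vadd (vscal (/a - /b) (vsub v (vscal (dot u' v) u')))
            (vscal (/b) (vadd (vscal (dot (vsub u u') v) u) (vscal (dot u' v) (vsub u u'))))).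
  { rewrite dot_subl. veq. }
  rewrite E. eapply Rle_trans. apply vnorm_triangle. rewrite !vnorm_scal.
  pose proof (proj_bound u' v Hun').
  assert (H2: Rabs (/a - /b) <= k / (a*b)).
  { apply abs_div_bound. nra. replace ((/a - /b) * (a*b)) with (b - a) by (field; lra).
    rewrite <- Rabs_Ropp, Ropp_minus_distr. auto. }
  assert (H3: k / (a*b) <= 2 * k / (b*b)).
  { unfold Rdiv. apply Rmult_le_reg_r with (a*b*b). { apply Rmult_lt_0_compat; [apply Rmult_lt_0_compat|]; lra. }
    replace (k * / (a * b) * (a * b * b)) with (b*k) by (field; lra).
    replace (2 * k * / (b * b) * (a * b * b)) with (2 * a * k) by (field; lra). nra. }
  assert (Hw: vnorm (vadd (vscal (dot (vsub u u') v) u) (vscal (dot u' v) (vsub u u'))) <= 2 * (4 * k / b) * vnorm v).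
  { eapply Rle_trans. apply vnorm_triangle. rewrite !vnorm_scal, Hun.
    pose proof (CS (vsub u u') v). pose proof (CS u' v). rewrite Hun' in H1.
    rewrite vnorm_sub_sym in Hu. fold u u' in Hu.
    assert (0 <= vnorm (vsub u u')) by apply vnorm_ge0.
    assert (Rabs (dot u' v) * vnorm (vsub u u') <= vnorm v * (4 * k / b)) by (apply Rmult_le_compat; auto using Rabs_pos; lra).
    assert (Rabs (dot (vsub u u') v) <= (4 * k / b) * vnorm v).
    { eapply Rle_trans. exact H0. apply Rmult_le_compat_r; auto. }
    lra. }
  rewrite (Rabs_pos_eq (/b)) by (left; apply Rinv_0_lt_compat; lra).
  assert (T1: Rabs (/ a - / b) * vnorm (vsub v (vscal (dot u' v) u')) <= (2*k/(b*b)) * (2 * vnorm v)).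
  { apply Rmult_le_compat; auto using Rabs_pos, vnorm_ge0. lra. }
  assert (T2: / b * vnorm (vadd (vscal (dot (vsub u u') v) u) (vscal (dot u' v) (vsub u u'))) <= /b * (2 * (4 * k / b) * vnorm v)).
  { apply Rmult_le_compat_l; auto. left; apply Rinv_0_lt_compat; lra. }
  assert (/ b * (2 * (4 * k / b) * vnorm v) = 8 * k * vnorm v / (b*b)) by (field; lra).
  assert (2 * k / (b * b) * (2 * vnorm v) = 4 * k * vnorm v / (b*b)) by (field; lra).
  assert (12 * k * vnorm v / (b * b) = 8 * k * vnorm v / (b*b) + 4 * k * vnorm v / (b*b)) by (field; lra).
  lra. Qed.

Lemma vadd_sub_cancel x h : vsub (vadd x h) x = h.
Proof. veq. Qed.

Lemma has_grad_norm_sub x a : x <> a -> has_grad (fun z => vnorm (vsub z a)) x (U (vsub x a)).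
Proof. intros Hxa eps Heps.
  assert (Hy: vsub x a <> vzero). { intro E. apply Hxa. vdes; vunf; cbn in E. injection E; intros; f_equal; [f_equal|]; lra. }
  pose proof (vnorm_pos _ Hy) as Hb.
  exists (eps * vnorm (vsub x a) / 2). split. apply Rmult_lt_0_compat; [nra| lra].
  intros h Hh. replace (vsub (vadd x h) a) with (vadd (vsub x a) h) by veq.
  eapply Rle_trans. apply norm_expand; auto.
  assert (0 <= vnorm h) by apply vnorm_ge0.
  unfold Rdiv. apply Rmult_le_reg_r with (vnorm (vsub x a)); auto.
  replace (2 * vnorm h * vnorm h * / vnorm (vsub x a) * vnorm (vsub x a)) with (2 * vnorm h * vnorm h) by (field; lra).
  assert (2 * vnorm h <= eps * vnorm (vsub x a)) by lra. nra. Qed.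

Lemma has_grad_ext f f' x g : has_grad f x g -> (forall z, f z = f' z) -> has_grad f' x g.
Proof. intros H E eps He. destruct (H eps He) as [d [Hd H']]. exists d; split; auto.
  intros h Hh. rewrite <- !E. auto. Qed.

Lemma has_grad_add f1 f2 x g1 g2 : has_grad f1 x g1 -> has_grad f2 x g2 ->
  has_grad (fun z => f1 z + f2 z) x (vadd g1 g2).
Proof. intros H1 H2 eps He.
  destruct (H1 (eps/2)) as [d1 [Hd1 H1']]; try lra. destruct (H2 (eps/2)) as [d2 [Hd2 H2']]; try lra.
  exists (Rmin d1 d2). split. apply Rmin_pos; auto.
  intros h Hh. specialize (H1' h ltac:(eapply Rlt_le_trans; [exact Hh| apply Rmin_l])).
  specialize (H2' h ltac:(eapply Rlt_le_trans; [exact Hh| apply Rmin_r])).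
  rewrite dot_addl.
  replace (f1 (vadd x h) + f2 (vadd x h) - (f1 x + f2 x) - (dot g1 h + dot g2 h))
    with ((f1 (vadd x h) - f1 x - dot g1 h) + (f2 (vadd x h) - f2 x - dot g2 h)) by ring.
  eapply Rle_trans. apply Rabs_triang. lra. Qed.

Lemma has_grad_const f x g k : has_grad f x g -> has_grad (fun z => f z - k) x g.
Proof. intros H eps He. destruct (H eps He) as [d [Hd H']]. exists d; split; auto.
  intros h Hh. replace (f (vadd x h) - k - (f x - k) - dot g h) with (f (vadd x h) - f x - dot g h) by ring. auto. Qed.

Lemma has_deriv_ext F F' x L : has_deriv F x L -> (forall z, F z = F' z) -> has_deriv F' x L.
Proof. intros [HL H] E. split; auto. intros eps He. destruct (H eps He) as [d [Hd H']]. exists d; split; auto.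
  intros h Hh. rewrite <- !E. auto. Qed.

Lemma has_deriv_add F1 F2 x L1 L2 : has_deriv F1 x L1 -> has_deriv F2 x L2 ->
  has_deriv (fun z => vadd (F1 z) (F2 z)) x (fun h => vadd (L1 h) (L2 h)).
Proof. intros [HL1 H1] [HL2 H2]. split.
  { destruct HL1 as [A1 S1]; destruct HL2 as [A2 S2]. split; intros; rewrite ?A1, ?A2, ?S1, ?S2; veq. }
  intros eps He.
  destruct (H1 (eps/2)) as [d1 [Hd1 H1']]; try lra. destruct (H2 (eps/2)) as [d2 [Hd2 H2']]; try lra.
  exists (Rmin d1 d2). split. apply Rmin_pos; auto.
  intros h Hh. specialize (H1' h ltac:(eapply Rlt_le_trans; [exact Hh| apply Rmin_l])).
  specialize (H2' h ltac:(eapply Rlt_le_trans; [exact Hh| apply Rmin_r])).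
  replace (vsub (vsub (vadd (F1 (vadd x h)) (F2 (vadd x h))) (vadd (F1 x) (F2 x))) (vadd (L1 h) (L2 h)))
    with (vadd (vsub (vsub (F1 (vadd x h)) (F1 x)) (L1 h)) (vsub (vsub (F2 (vadd x h)) (F2 x)) (L2 h))).
  eapply Rle_trans. apply vnorm_triangle. lra.
  veq. Qed.

Lemma has_deriv_scal F x L c : has_deriv F x L -> has_deriv (fun z => vscal c (F z)) x (fun h => vscal c (L h)).
Proof. intros [HL H]. split.
  { destruct HL as [A1 S1]. split; intros; rewrite ?A1, ?S1; veq. }
  intros eps He.
  destruct (H (eps / (Rabs c + 1))) as [d [Hd H']]. apply Rdiv_lt_0_compat; auto; pose proof (Rabs_pos c); lra.
  exists d; split; auto. intros h Hh.
  replace (vsub (vsub (vscal c (F (vadd x h))) (vscal c (F x))) (vscal c (L h)))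
    with (vscal c (vsub (vsub (F (vadd x h)) (F x)) (L h))) by veq.
  rewrite vnorm_scal. specialize (H' h Hh). pose proof (Rabs_pos c). pose proof (vnorm_ge0 h).
  eapply Rle_trans. apply Rmult_le_compat_l. auto. exact H'.
  assert (Rabs c * (eps / (Rabs c + 1)) <= eps).
  { unfold Rdiv. apply Rmult_le_reg_r with (Rabs c + 1). lra.
    replace (Rabs c * (eps * / (Rabs c + 1)) * (Rabs c + 1)) with (Rabs c * eps) by (field; lra). nra. }
  nra. Qed.

Lemma has_deriv_sub_const a x : has_deriv (fun z => vsub z a) x (fun h => h).
Proof. split. split; intros; reflexivity. intros eps He. exists 1. split. lra.
  intros h Hh. replace (vsub (vsub (vsub (vadd x h) a) (vsub x a)) h) with vzero by veq.
  rewrite vnorm_zero. pose proof (vnorm_ge0 h). nra. Qed.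

Lemma has_deriv_U G q L : has_deriv G q L -> G q <> vzero ->
  has_deriv (fun x => U (G x)) q (fun h => DU (G q) (L h)).
Proof. intros [HL H] Hg. split.
  { split; intros; [rewrite (lin_add L), (lin_add (DU (G q))) | rewrite (lin_scal L), (lin_scal (DU (G q)))]; auto using DU_lin; split; auto. }
  pose proof (vnorm_pos _ Hg) as Hb. set (b := vnorm (G q)) in *.
  destruct (lin_bound L HL) as [K [HK HLK]].
  intros eps He.
  destruct (H (Rmin 1 (eps * b / 4))) as [d1 [Hd1 H1]]. apply Rmin_pos; [lra| nra].
  exists (Rmin d1 (Rmin (b / (2 * (K+1))) (eps * b * b / (16 * (K+1) * (K+1))))).
  split. apply Rmin_pos; auto. apply Rmin_pos. apply Rdiv_lt_0_compat; lra.
  apply Rdiv_lt_0_compat. apply Rmult_lt_0_compat; [apply Rmult_lt_0_compat|]; lra. apply Rmult_lt_0_compat; [apply Rmult_lt_0_compat|]; lra.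
  intros h Hh.
  assert (Hh1: vnorm h < d1) by (eapply Rlt_le_trans; [exact Hh| apply Rmin_l]).
  assert (Hh2: vnorm h < b / (2 * (K+1))) by (eapply Rlt_le_trans; [exact Hh|]; eapply Rle_trans; [apply Rmin_r| apply Rmin_l]).
  assert (Hh3: vnorm h < eps * b * b / (16 * (K+1) * (K+1))) by (eapply Rlt_le_trans; [exact Hh|]; eapply Rle_trans; [apply Rmin_r| apply Rmin_r]).
  specialize (H1 h Hh1).
  set (d := vsub (G (vadd q h)) (G q)).
  assert (Hn0: 0 <= vnorm h) by apply vnorm_ge0.
  assert (Hd: vnorm d <= (K + 1) * vnorm h).
  { rewrite <- (vsub_add d (L h)) at 1.
    eapply Rle_trans. apply vnorm_triangle. pose proof (HLK h).
    assert (Rmin 1 (eps * b / 4) <= 1) by apply Rmin_l. unfold d. nra. }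
  assert (Hd2: vnorm d <= b / 2).
  { eapply Rle_trans. exact Hd. apply Rmult_le_reg_l with (/ (K+1)). apply Rinv_0_lt_compat; lra.
    replace (/ (K + 1) * ((K + 1) * vnorm h)) with (vnorm h) by (field; lra).
    replace (/ (K + 1) * (b/2)) with (b / (2 * (K + 1))) by (field; lra). lra. }
  pose proof (U_second (G q) d Hg Hd2) as HS.
  replace (vadd (G q) d) with (G (vadd q h)) in HS by (unfold d; veq).
  fold b in HS.
  replace (vsub (vsub (U (G (vadd q h))) (U (G q))) (DU (G q) (L h)))
    with (vadd (vsub (vsub (U (G (vadd q h))) (U (G q))) (DU (G q) d)) (DU (G q) (vsub d (L h)))).
  2:{ rewrite lin_sub by apply DU_lin. veq. }
  eapply Rle_trans. apply vnorm_triangle.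
  pose proof (DU_bound (G q) (vsub d (L h)) Hg) as HB. fold b in HB.
  assert (T1: 8 * (vnorm d * vnorm d) / (b * b) <= eps / 2 * vnorm h).
  { assert (vnorm d * vnorm d <= ((K+1) * vnorm h) * ((K+1) * vnorm h)) by (apply Rmult_le_compat; auto using vnorm_ge0).
    unfold Rdiv. apply Rmult_le_reg_r with (b*b). nra.
    replace (8 * (vnorm d * vnorm d) * / (b * b) * (b * b)) with (8 * (vnorm d * vnorm d)) by (field; lra).
    assert (vnorm h * (16 * (K + 1) * (K + 1)) <= eps * b * b).
    { apply Rmult_le_reg_r with (/ (16 * (K + 1) * (K + 1))). apply Rinv_0_lt_compat; nra.
      replace (vnorm h * (16 * (K + 1) * (K + 1)) * / (16 * (K + 1) * (K + 1))) with (vnorm h) by (field; lra). lra. }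
    nra. }
  assert (T2: 2 * vnorm (vsub d (L h)) / b <= eps / 2 * vnorm h).
  { unfold d. assert (Rmin 1 (eps * b / 4) <= eps * b / 4) by apply Rmin_r.
    unfold Rdiv. apply Rmult_le_reg_r with b. lra.
    replace (2 * vnorm (vsub (vsub (G (vadd q h)) (G q)) (L h)) * / b * b) with (2 * vnorm (vsub (vsub (G (vadd q h)) (G q)) (L h))) by (field; lra).
    nra. }
  lra. Qed.

Lemma deriv_unique F x L1 L2 : has_deriv F x L1 -> has_deriv F x L2 -> forall v, L1 v = L2 v.
Proof. intros [HL1 H1] [HL2 H2] v.
  assert (Hz: vnorm (vsub (L1 v) (L2 v)) = 0).
  { destruct (Req_dec (vnorm v) 0) as [Hv|Hv].
    { apply vnorm_eq0 in Hv. subst. rewrite !lin_zero by auto. replace (vsub vzero vzero) with vzero by veq. apply vnorm_zero. }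
    pose proof (vnorm_ge0 v). assert (Hvp: 0 < vnorm v) by lra.
    apply Rle_antisym; [|apply vnorm_ge0].
    apply Rnot_lt_le. intros Hlt.
    set (m := vnorm (vsub (L1 v) (L2 v))) in *.
    set (eps := m / (4 * vnorm v)).
    assert (He: 0 < eps) by (apply Rdiv_lt_0_compat; lra).
    destruct (H1 eps He) as [d1 [Hd1 H1']]. destruct (H2 eps He) as [d2 [Hd2 H2']].
    set (t := Rmin d1 d2 / (2 * vnorm v)).
    assert (Ht: 0 < t) by (apply Rdiv_lt_0_compat; [apply Rmin_pos|]; lra).
    assert (Htv: vnorm (vscal t v) = t * vnorm v) by (rewrite vnorm_scal, Rabs_pos_eq; lra).
    assert (Htv2: t * vnorm v < Rmin d1 d2).
    { unfold t. replace (Rmin d1 d2 / (2 * vnorm v) * vnorm v) with (Rmin d1 d2 / 2) by (field; lra).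
      pose proof (Rmin_pos d1 d2 Hd1 Hd2). lra. }
    specialize (H1' (vscal t v) ltac:(rewrite Htv; eapply Rlt_le_trans; [exact Htv2| apply Rmin_l])).
    specialize (H2' (vscal t v) ltac:(rewrite Htv; eapply Rlt_le_trans; [exact Htv2| apply Rmin_r])).
    rewrite Htv in H1', H2'.
    assert (E: vscal t (vsub (L1 v) (L2 v)) = vsub (vsub (vsub (F (vadd x (vscal t v))) (F x)) (L2 (vscal t v)))
              (vsub (vsub (F (vadd x (vscal t v))) (F x)) (L1 (vscal t v)))).
    { rewrite (lin_scal L1 t v HL1), (lin_scal L2 t v HL2). veq. }
    pose proof (vnorm_sub_le (vsub (vsub (F (vadd x (vscal t v))) (F x)) (L2 (vscal t v)))
              (vsub (vsub (F (vadd x (vscal t v))) (F x)) (L1 (vscal t v)))).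
    rewrite <- E, vnorm_scal, Rabs_pos_eq in H0 by lra. fold m in H0.
    assert (HH: t * m <= 2 * eps * (t * vnorm v)) by lra.
    unfold eps in HH. replace (2 * (m / (4 * vnorm v)) * (t * vnorm v)) with (t * m / 2) in HH by (field; lra).
    nra. }
  apply vnorm_eq0 in Hz. rewrite <- (vsub_add (L1 v) (L2 v)), Hz. veq. Qed.

Lemma poly_deriv f A B c l : derivable_pt_lim f c l -> derivable_pt_lim (fun t => f t - (t*A + t*t*B)) c (l - (A + 2*c*B)).
Proof. intros. replace (l - (A + 2*c*B)) with (l - ((1*A + c*0) + ((1*c + c*1)*B + c*c*0))) by ring.
apply (derivable_pt_lim_minus f (fun t => t*A + t*t*B)). auto.
apply (derivable_pt_lim_plus (fun t => t*A) (fun t => t*t*B)).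
apply (derivable_pt_lim_mult (fun t => t) (fun _ => A)). apply derivable_pt_lim_id. apply derivable_pt_lim_const.
apply (derivable_pt_lim_mult (fun t => t*t) (fun _ => B)).
apply (derivable_pt_lim_mult (fun t => t) (fun t => t)); apply derivable_pt_lim_id. apply derivable_pt_lim_const.
Qed.

Lemma line_deriv F g q w t : has_grad F (vadd q (vscal t w)) g ->
  derivable_pt_lim (fun s => F (vadd q (vscal s w))) t (dot g w).
Proof. intros H eps He.
  pose proof (vnorm_ge0 w).
  destruct (H (eps / (2 * (vnorm w + 1)))) as [d [Hd H']]. apply Rdiv_lt_0_compat; lra.
  assert (Hd2: 0 < d / (vnorm w + 1)) by (apply Rdiv_lt_0_compat; lra).
  exists (mkposreal _ Hd2). intros s Hs0 Hs. simpl in Hs.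
  assert (Hsw: vnorm (vscal s w) < d).
  { rewrite vnorm_scal. apply Rle_lt_trans with (Rabs s * (vnorm w + 1)). pose proof (Rabs_pos s); nra.
    apply Rmult_lt_reg_r with (/ (vnorm w + 1)). apply Rinv_0_lt_compat; lra.
    replace (Rabs s * (vnorm w + 1) * / (vnorm w + 1)) with (Rabs s) by (field; lra). exact Hs. }
  specialize (H' _ Hsw). replace (vadd (vadd q (vscal t w)) (vscal s w)) with (vadd q (vscal (t + s) w)) in H' by veq.
  rewrite dot_scalr, vnorm_scal in H'.
  assert (Hsp: 0 < Rabs s) by (apply Rabs_pos_lt; auto).
  replace ((F (vadd q (vscal (t + s) w)) - F (vadd q (vscal t w))) / s - dot g w)
    with ((F (vadd q (vscal (t + s) w)) - F (vadd q (vscal t w)) - s * dot g w) / s) by (field; auto).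
  unfold Rdiv at 1. rewrite Rabs_mult, Rabs_inv.
  apply Rle_lt_trans with (eps / (2 * (vnorm w + 1)) * (Rabs s * vnorm w) * / Rabs s).
  apply Rmult_le_compat_r; auto. left; apply Rinv_0_lt_compat; auto.
  replace (eps / (2 * (vnorm w + 1)) * (Rabs s * vnorm w) * / Rabs s) with (eps * vnorm w / (2 * (vnorm w + 1))) by (field; lra).
  apply Rmult_lt_reg_r with (2 * (vnorm w + 1)). lra.
  replace (eps * vnorm w / (2 * (vnorm w + 1)) * (2 * (vnorm w + 1))) with (eps * vnorm w) by (field; lra). nra. Qed.

Lemma taylor2 F G L q r : 0 < r -> (forall x, ball q r x -> has_grad F x (G x)) -> has_deriv G q L ->
  forall eps, 0 < eps -> exists del, 0 < del /\ forall h, vnorm h < del ->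
   Rabs (F (vadd q h) - F q - dot (G q) h - / 2 * dot (L h) h) <= eps * (vnorm h * vnorm h).
Proof. intros Hr Hg [HL HD] eps He.
  destruct (HD eps He) as [d [Hd HD']].
  exists (Rmin r d). split. apply Rmin_pos; auto. intros h Hh.
  assert (Hh1: vnorm h < r) by (eapply Rlt_le_trans; [exact Hh| apply Rmin_l]).
  assert (Hh2: vnorm h < d) by (eapply Rlt_le_trans; [exact Hh| apply Rmin_r]).
  set (A := dot (G q) h). set (B := / 2 * dot (L h) h).
  set (k := fun t => F (vadd q (vscal t h)) - (t*A + t*t*B)).
  assert (Hder: forall c, 0 <= c <= 1 -> derivable_pt_lim k c (dot (G (vadd q (vscal c h))) h - (A + 2*c*B))).
  { intros c Hc. apply poly_deriv. apply line_deriv. apply Hg. unfold ball.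
    replace (vsub (vadd q (vscal c h)) q) with (vscal c h) by veq. rewrite vnorm_scal, Rabs_pos_eq by lra.
    pose proof (vnorm_ge0 h). nra. }
  destruct (MVT_cor2 k _ 0 1 Rlt_0_1 Hder) as [c [Hc1 Hc2]].
  assert (E1: k 1 = F (vadd q h) - A - B) by (unfold k; replace (vadd q (vscal 1 h)) with (vadd q h) by veq; ring).
  assert (E0: k 0 = F q) by (unfold k; replace (vadd q (vscal 0 h)) with q by veq; ring).
  rewrite E1, E0 in Hc1.
  replace (F (vadd q h) - F q - A - B) with (dot (G (vadd q (vscal c h))) h - (A + 2 * c * B)) by lra.
  assert (Hch: vnorm (vscal c h) < d) by (rewrite vnorm_scal, Rabs_pos_eq by lra; pose proof (vnorm_ge0 h); nra).
  specialize (HD' _ Hch).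
  replace (dot (G (vadd q (vscal c h))) h - (A + 2 * c * B))
    with (dot (vsub (vsub (G (vadd q (vscal c h))) (G q)) (L (vscal c h))) h).
  2:{ unfold A, B. rewrite !dot_subl, (lin_scal L), dot_scall by auto. field. }
  eapply Rle_trans. apply CS.
  rewrite vnorm_scal, Rabs_pos_eq in HD' by lra.
  pose proof (vnorm_ge0 h).
  apply Rle_trans with (eps * (c * vnorm h) * vnorm h). apply Rmult_le_compat_r; auto.
  assert (0 <= eps * vnorm h * vnorm h) by (apply Rmult_le_pos; [apply Rmult_le_pos|]; lra).
  nra. Qed.

Lemma grad_cont F x g : has_grad F x g -> forall eps, 0 < eps -> exists del, 0 < del /\
  forall h, vnorm h < del -> Rabs (F (vadd x h) - F x) <= eps.
Proof. intros H eps He. pose proof (vnorm_ge0 g).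
  destruct (H 1 Rlt_0_1) as [d [Hd H']].
  exists (Rmin d (eps / (vnorm g + 1))). split. apply Rmin_pos; auto. apply Rdiv_lt_0_compat; lra.
  intros h Hh. specialize (H' h ltac:(eapply Rlt_le_trans; [exact Hh|apply Rmin_l])).
  assert (Hh2: vnorm h < eps / (vnorm g + 1)) by (eapply Rlt_le_trans; [exact Hh|apply Rmin_r]).
  pose proof (CS g h).
  replace (F (vadd x h) - F x) with ((F (vadd x h) - F x - dot g h) + dot g h) by ring.
  eapply Rle_trans. apply Rabs_triang.
  assert (vnorm h * (vnorm g + 1) <= eps).
  { apply Rmult_le_reg_r with (/ (vnorm g + 1)). apply Rinv_0_lt_compat; lra.
    replace (vnorm h * (vnorm g + 1) * / (vnorm g + 1)) with (vnorm h) by (field; lra).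
    unfold Rdiv in Hh2. lra. }
  nra. Qed.

Lemma deriv_cont F x L : has_deriv F x L -> forall eps, 0 < eps -> exists del, 0 < del /\
  forall h, vnorm h < del -> vnorm (vsub (F (vadd x h)) (F x)) <= eps.
Proof. intros [HL H] eps He. destruct (lin_bound L HL) as [K [HK HK']].
  destruct (H 1 Rlt_0_1) as [d [Hd H']].
  exists (Rmin d (eps / (K + 1))). split. apply Rmin_pos; auto. apply Rdiv_lt_0_compat; lra.
  intros h Hh. specialize (H' h ltac:(eapply Rlt_le_trans; [exact Hh|apply Rmin_l])).
  assert (Hh2: vnorm h < eps / (K + 1)) by (eapply Rlt_le_trans; [exact Hh|apply Rmin_r]).
  rewrite <- (vsub_add (vsub (F (vadd x h)) (F x)) (L h)).
  eapply Rle_trans. apply vnorm_triangle. pose proof (HK' h). pose proof (vnorm_ge0 h).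
  assert (vnorm h * (K + 1) <= eps).
  { apply Rmult_le_reg_r with (/ (K + 1)). apply Rinv_0_lt_compat; lra.
    replace (vnorm h * (K + 1) * / (K + 1)) with (vnorm h) by (field; lra).
    unfold Rdiv in Hh2. lra. }
  nra. Qed.

Definition sdata (F : R3 -> R) (G : R3 -> R3) (L : R3 -> R3) (q : R3) (r : R) (n : R3) (sg : R) : Prop :=
  0 < r /\ (forall x, ball q r x -> has_grad F x (G x)) /\ has_deriv G q L /\ F q = 0 /\
  G q <> vzero /\ (sg = 1 \/ sg = -1) /\ n = vscal (sg / vnorm (G q)) (G q).

Definition tau (G L : R3 -> R3) (q : R3) (sg : R) (v : R3) : R :=
  - sg * dot (L v) v / (2 * vnorm (G q)).

Definition XP (q v n : R3) (h t : R) : R3 := vadd q (vadd (vscal h v) (vscal t n)).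

Lemma sdata_facts F G L q r n sg : sdata F G L q r n sg ->
  vnorm n = 1 /\ dot (G q) n = sg * vnorm (G q) /\ sg * sg = 1 /\ 0 < vnorm (G q).
Proof. intros (Hr & Hg & HD & HF & Hg0 & Hsg & Hn). pose proof (vnorm_pos _ Hg0) as Hb.
  assert (sg * sg = 1) by (destruct Hsg; subst; ring).
  subst n. repeat split; auto.
  - rewrite vnorm_scal. unfold Rdiv. rewrite Rabs_mult, Rabs_inv, (Rabs_pos_eq (vnorm _)) by lra.
    destruct Hsg; subst sg; [rewrite Rabs_R1| rewrite Rabs_left by lra]; field; lra.
  - rewrite dot_scalr, <- vnorm_sq. field; lra. Qed.

Lemma dot_n_v F G L q r n sg v : sdata F G L q r n sg -> dot (G q) v = 0 -> dot n v = 0.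
Proof. intros (Hr & Hg & HD & HF & Hg0 & Hsg & Hn) Hv. subst n. rewrite dot_scall, Hv. ring. Qed.

Lemma EXP F G L q r n sg v : sdata F G L q r n sg -> dot (G q) v = 0 ->
  forall eps, 0 < eps -> exists del, 0 < del /\ forall h t, Rabs h < del -> Rabs t < del ->
  Rabs (F (XP q v n h t) - (sg * vnorm (G q) * (t - tau G L q sg v * (h*h)) +
       / 2 * (h * t * (dot (L v) n + dot (L n) v) + t * t * dot (L n) n)))
   <= eps * (h * h * dot v v + t * t).
Proof. intros Hs Hv eps He.
  destruct (sdata_facts _ _ _ _ _ _ _ Hs) as (Hn1 & Hgn & Hsg2 & Hb).
  pose proof (dot_n_v _ _ _ _ _ _ _ v Hs Hv) as Hnv.
  destruct Hs as (Hr & Hg & HD & HF & Hg0 & Hsg & Hn).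
  destruct (taylor2 F G L q r Hr Hg HD eps He) as [d [Hd HT]].
  pose proof (vnorm_ge0 v).
  exists (d / (vnorm v + 1)). split. apply Rdiv_lt_0_compat; lra.
  intros h t Hh Ht.
  set (w := vadd (vscal h v) (vscal t n)).
  assert (Hw2: dot w w = h * h * dot v v + t * t).
  { unfold w. rewrite !dot_addl, !dot_addr, !dot_scall, !dot_scalr. rewrite ?(dot_comm v n), ?Hnv.
    rewrite <- (vnorm_sq n), Hn1. ring. }
  assert (Hwn: vnorm w < d).
  { unfold w. eapply Rle_lt_trans. apply vnorm_triangle. rewrite !vnorm_scal, Hn1.
    apply Rlt_le_trans with ((d / (vnorm v + 1)) * (vnorm v + 1)). 2:{ right; field; lra. }
    pose proof (Rabs_pos h); pose proof (Rabs_pos t).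
    assert (0 < d / (vnorm v + 1)) by (apply Rdiv_lt_0_compat; lra). nra. }
  specialize (HT w Hwn). rewrite vnorm_sq, Hw2 in HT.
  unfold XP. fold w. rewrite HF in HT.
  replace (F (vadd q w) - (sg * vnorm (G q) * (t - tau G L q sg v * (h * h)) +
     / 2 * (h * t * (dot (L v) n + dot (L n) v) + t * t * dot (L n) n)))
   with (F (vadd q w) - 0 - dot (G q) w - / 2 * dot (L w) w); auto.
  unfold w. destruct HD as [HL _]. rewrite (lin_add L), !(lin_scal L) by auto.
  rewrite !dot_addl, !dot_addr, !dot_scall, !dot_scalr, Hv, Hgn.
  unfold tau. field_simplify; [|lra]. rewrite (dot_comm (L v) v). 
  replace (sg ^ 2) with 1 by (simpl; lra). field_simplify; lra. Qed.

Lemma contpt_of f a : (forall eps, 0 < eps -> exists del, 0 < del /\ forall d, Rabs d < del -> Rabs (f (a + d) - f a) <= eps) ->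
  continuity_pt f a.
Proof. intros H eps He. destruct (H (eps/2)) as [d [Hd H']]. lra.
  exists d. split; auto. intros x [_ Hx]. unfold R_dist in *. simpl in *.
  specialize (H' (x - a) Hx). replace (a + (x - a)) with x in H' by ring. unfold R_dist. lra. Qed.

Lemma XP_shift q v n h t d : XP q v n h (t + d) = vadd (XP q v n h t) (vscal d n).
Proof. unfold XP. veq. Qed.

Lemma XP_ball q v n h t : vnorm n = 1 -> vnorm (vsub (XP q v n h t) q) <= Rabs h * vnorm v + Rabs t.
Proof. intros Hn. unfold XP. rewrite vadd_sub_cancel.
  eapply Rle_trans. apply vnorm_triangle. rewrite !vnorm_scal, Hn. lra. Qed.

Lemma HLexist F G L q r n sg v : sdata F G L q r n sg -> dot (G q) v = 0 ->
  forall eps, 0 < eps -> exists del, 0 < del /\ forall h, 0 < Rabs h < del ->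
  exists t, Rabs (t - tau G L q sg v * (h*h)) <= eps * (h*h) /\ F (XP q v n h t) = 0 /\
            Rabs t <= (Rabs (tau G L q sg v) + eps) * (h * h).
Proof. intros Hs Hv eps He.
  destruct (sdata_facts _ _ _ _ _ _ _ Hs) as (Hn1 & Hgn & Hsg2 & Hb).
  pose proof Hs as (Hr & Hg & HD & HF & Hg0 & Hsg & Hn).
  set (tau0 := tau G L q sg v). set (b := vnorm (G q)) in *.
  set (P := Rabs (dot (L v) n + dot (L n) v)). set (Q := Rabs (dot (L n) n)). set (V := dot v v).
  set (C := Rabs tau0 + eps).
  assert (HP: 0 <= P) by apply Rabs_pos. assert (HQ: 0 <= Q) by apply Rabs_pos.
  assert (HV: 0 <= V) by apply dot_ge0. assert (HC: 0 < C) by (pose proof (Rabs_pos tau0); unfold C; lra).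
  set (e2 := b * eps / (4 * (V + C*C + 1))).
  assert (He2: 0 < e2) by (apply Rdiv_lt_0_compat; nra).
  destruct (EXP F G L q r n sg v Hs Hv e2 He2) as [d0 [Hd0 HE]].
  pose proof (vnorm_ge0 v).
  set (d1 := b * eps / (2 * (P * C + Q * C * C) + 1)).
  assert (Hd1: 0 < d1) by (apply Rdiv_lt_0_compat; nra).
  set (d2 := d0 / (C + 1)). assert (Hd2: 0 < d2) by (apply Rdiv_lt_0_compat; lra).
  set (d3 := r / (vnorm v + C + 1)). assert (Hd3: 0 < d3) by (apply Rdiv_lt_0_compat; lra).
  exists (Rmin 1 (Rmin d0 (Rmin d1 (Rmin d2 d3)))). split.
  { repeat apply Rmin_pos; lra. }
  intros h [Hh0 Hh].
  assert (Hh1: Rabs h < 1) by (eapply Rlt_le_trans; [exact Hh| apply Rmin_l]).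
  assert (Hhd0: Rabs h < d0) by (eapply Rlt_le_trans; [exact Hh|]; eapply Rle_trans; [apply Rmin_r| apply Rmin_l]).
  assert (Hhd1: Rabs h < d1) by (eapply Rlt_le_trans; [exact Hh|]; eapply Rle_trans; [apply Rmin_r|]; eapply Rle_trans; [apply Rmin_r| apply Rmin_l]).
  assert (Hhd2: Rabs h < d2) by (eapply Rlt_le_trans; [exact Hh|]; eapply Rle_trans; [apply Rmin_r|]; eapply Rle_trans; [apply Rmin_r|]; eapply Rle_trans; [apply Rmin_r| apply Rmin_l]).
  assert (Hhd3: Rabs h < d3) by (eapply Rlt_le_trans; [exact Hh|]; eapply Rle_trans; [apply Rmin_r|]; eapply Rle_trans; [apply Rmin_r|]; eapply Rle_trans; [apply Rmin_r| apply Rmin_r]).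
  assert (Hhh: h * h = Rabs h * Rabs h) by (rewrite <- Rabs_mult; rewrite Rabs_pos_eq; nra).
  assert (Hh2pos: 0 < h * h) by nra.
  assert (Hsmall: forall t, Rabs t <= C * (h*h) -> Rabs t < d0 /\ Rabs t < d3 * C /\
      Rabs (F (XP q v n h t) - sg * b * (t - tau0 * (h*h))) <= b * eps * (h*h) / 2).
  { intros t Ht.
    assert (Ht1: Rabs t <= C * Rabs h). { rewrite Hhh in Ht. assert (Rabs h * Rabs h <= Rabs h) by (pose proof (Rabs_pos h); nra). eapply Rle_trans. exact Ht. apply Rmult_le_compat_l; lra. }
    assert (Ht0: Rabs t < d0).
    { eapply Rle_lt_trans. exact Ht1. apply Rle_lt_trans with (C * d2). nra.
      unfold d2. apply Rlt_le_trans with ((C+1) * (d0 / (C+1))). { assert (0 < d0/(C+1)) by (apply Rdiv_lt_0_compat; lra). nra. } right; field; lra. }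
    split; auto. split. nra.
    specialize (HE h t Hhd0 Ht0). fold b tau0 in HE.
    set (R0 := / 2 * (h * t * (dot (L v) n + dot (L n) v) + t * t * dot (L n) n)) in HE.
    assert (HR0: Rabs R0 <= / 2 * (P * C + Q * C * C) * Rabs h * (h*h)).
    { unfold R0. rewrite Rabs_mult, Rabs_pos_eq by lra.
      eapply Rle_trans. apply Rmult_le_compat_l. lra. apply Rabs_triang.
      rewrite !Rabs_mult. fold P Q.
      assert (Rabs t * Rabs t <= (C * (h*h)) * (C * Rabs h)) by (apply Rmult_le_compat; auto using Rabs_pos).
      assert (Rabs h * Rabs t * P <= Rabs h * (C * (h * h)) * P).
      { apply Rmult_le_compat_r; auto. apply Rmult_le_compat_l; auto using Rabs_pos. }
      assert (Rabs t * Rabs t * Q <= (C * (h*h)) * (C * Rabs h) * Q) by (apply Rmult_le_compat_r; auto).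
      nra. }
    assert (HR1: / 2 * (P * C + Q * C * C) * Rabs h <= b * eps / 4).
    { apply Rle_trans with (/2 * (P * C + Q * C * C) * d1). apply Rmult_le_compat_l. nra. lra.
      unfold d1. apply Rmult_le_reg_r with (2 * (P * C + Q * C * C) + 1). nra.
      replace (/ 2 * (P * C + Q * C * C) * (b * eps / (2 * (P * C + Q * C * C) + 1)) * (2 * (P * C + Q * C * C) + 1))
        with (/ 2 * (P * C + Q * C * C) * (b * eps)) by (field; nra).
      assert (0 <= P * C + Q * C * C) by nra. nra. }
    assert (HE2: e2 * (h * h * V + t * t) <= b * eps * (h*h) / 4).
    { assert (t * t <= C * C * (h*h)).
      { replace (t*t) with (Rabs t * Rabs t) by (rewrite <- Rabs_mult; apply Rabs_pos_eq; nra).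
        assert (Rabs t * Rabs t <= (C*(h*h)) * (C * (h*h))) by (apply Rmult_le_compat; auto using Rabs_pos).
        assert (h * h <= 1) by nra. nra. }
      unfold e2. apply Rle_trans with (b * eps / (4 * (V + C * C + 1)) * ((V + C*C) * (h*h))).
      apply Rmult_le_compat_l. left; apply Rdiv_lt_0_compat; nra. fold V. nra.
      unfold Rdiv. apply Rmult_le_reg_r with (4 * (V + C * C + 1)). nra.
      replace (b * eps * / (4 * (V + C * C + 1)) * ((V + C * C) * (h * h)) * (4 * (V + C * C + 1)))
        with (b * eps * ((V + C * C) * (h * h))) by (field; nra).
      replace (b * eps * (h * h) * / 4 * (4 * (V + C * C + 1))) with (b * eps * ((V + C*C + 1) * (h * h))) by field.
      assert (0 <= b * eps) by nra. apply Rmult_le_compat_l; nra. }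
    replace (F (XP q v n h t) - sg * b * (t - tau0 * (h * h))) with ((F (XP q v n h t) - (sg * b * (t - tau0 * (h * h)) + R0)) + R0) by ring.
    eapply Rle_trans. apply Rabs_triang.
    assert (Rabs R0 <= b * eps / 4 * (h*h)) by (eapply Rle_trans; [exact HR0|]; apply Rmult_le_compat_r; lra).
    fold V in HE. lra. }
  set (tm := tau0 * (h*h) - eps * (h*h)). set (tp := tau0 * (h*h) + eps * (h*h)).
  assert (Htm: Rabs tm <= C * (h*h)).
  { unfold tm, C. pose proof (Rle_abs tau0). pose proof (Rle_abs (-tau0)). rewrite Rabs_Ropp in *. apply Rabs_le. split; nra. }
  assert (Htp: Rabs tp <= C * (h*h)).
  { unfold tp, C. pose proof (Rle_abs tau0). pose proof (Rle_abs (-tau0)). rewrite Rabs_Ropp in *. apply Rabs_le. split; nra. }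
  set (f := fun t => sg * F (XP q v n h t)).
  assert (Hsgabs: Rabs sg = 1) by (destruct Hsg; subst; [apply Rabs_R1| rewrite Rabs_left; lra]).
  assert (Hfm: f tm < 0).
  { destruct (Hsmall tm Htm) as [_ [_ Hb']]. unfold f.
    assert (H0: Rabs (sg * F (XP q v n h tm) - sg * sg * b * (tm - tau0 * (h*h))) <= b * eps * (h * h) / 2).
    { replace (sg * F (XP q v n h tm) - sg * sg * b * (tm - tau0 * (h * h))) with (sg * (F (XP q v n h tm) - sg * b * (tm - tau0 * (h * h)))) by ring.
      rewrite Rabs_mult, Hsgabs. lra. }
    rewrite Hsg2 in H0. replace (1 * b * (tm - tau0 * (h * h))) with (- (b * eps * (h*h))) in H0 by (unfold tm; ring).
    assert (0 < b * eps * (h*h)) by (apply Rmult_lt_0_compat; nra).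
    revert H0; unfold Rabs; destruct Rcase_abs; intros; lra. }
  assert (Hfp: 0 < f tp).
  { destruct (Hsmall tp Htp) as [_ [_ Hb']]. unfold f.
    assert (H0: Rabs (sg * F (XP q v n h tp) - sg * sg * b * (tp - tau0 * (h*h))) <= b * eps * (h * h) / 2).
    { replace (sg * F (XP q v n h tp) - sg * sg * b * (tp - tau0 * (h * h))) with (sg * (F (XP q v n h tp) - sg * b * (tp - tau0 * (h * h)))) by ring.
      rewrite Rabs_mult, Hsgabs. lra. }
    rewrite Hsg2 in H0. replace (1 * b * (tp - tau0 * (h * h))) with (b * eps * (h*h)) in H0 by (unfold tp; ring).
    assert (0 < b * eps * (h*h)) by (apply Rmult_lt_0_compat; nra).
    revert H0; unfold Rabs; destruct Rcase_abs; intros; lra. }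
  assert (Hlt: tm < tp) by (unfold tm, tp; nra).
  assert (Hcont: forall a, tm <= a <= tp -> continuity_pt f a).
  { intros a Ha. apply contpt_of. intros e He'.
    assert (Ha': Rabs a <= C * (h*h)).
    { unfold Rabs; destruct Rcase_abs; unfold Rabs in Htm, Htp; destruct (Rcase_abs tm), (Rcase_abs tp); lra. }
    destruct (Hsmall a Ha') as [_ [Had3 _]].
    assert (Hball: ball q r (XP q v n h a)).
    { unfold ball. eapply Rle_lt_trans. apply XP_ball; auto.
      apply Rlt_le_trans with (d3 * vnorm v + d3 * C).
      assert (Rabs h * vnorm v <= d3 * vnorm v) by (apply Rmult_le_compat_r; lra). lra.
      assert (d3 * (vnorm v + C + 1) = r) by (unfold d3; field; lra). nra. }
    destruct (grad_cont F _ _ (Hg _ Hball) e He') as [dd [Hdd Hc]].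
    exists dd. split; auto. intros d Hd. unfold f. rewrite XP_shift.
    replace (sg * F (vadd (XP q v n h a) (vscal d n)) - sg * F (XP q v n h a)) with (sg * (F (vadd (XP q v n h a) (vscal d n)) - F (XP q v n h a))) by ring.
    rewrite Rabs_mult, Hsgabs. rewrite Rmult_1_l. apply Hc. rewrite vnorm_scal, Hn1. lra. }
  destruct (Ranalysis5.IVT_interv f tm tp Hcont Hlt Hfm Hfp) as [z [Hz Hfz]].
  exists z. unfold f in Hfz.
  assert (Fz: F (XP q v n h z) = 0) by (destruct Hsg; subst sg; lra).
  split; [| split; auto].
  - unfold tm, tp in Hz. unfold Rabs; destruct Rcase_abs; lra.
  - unfold Rabs; destruct Rcase_abs; unfold Rabs in Htm, Htp; destruct (Rcase_abs tm), (Rcase_abs tp); unfold C in *; lra.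
Qed.

Lemma REM F G L q r n sg v : sdata F G L q r n sg -> dot (G q) v = 0 ->
  forall C eta, 0 < C -> 0 < eta -> exists del, 0 < del /\ forall h t, Rabs h < del -> Rabs t <= C * (h*h) ->
  Rabs (F (XP q v n h t) - sg * vnorm (G q) * (t - tau G L q sg v * (h*h))) <= eta * (h*h).
Proof. intros Hs Hv C eta HC Heta.
  set (tau0 := tau G L q sg v). set (b := vnorm (G q)).
  set (P := Rabs (dot (L v) n + dot (L n) v)). set (Q := Rabs (dot (L n) n)). set (V := dot v v).
  assert (HP: 0 <= P) by apply Rabs_pos. assert (HQ: 0 <= Q) by apply Rabs_pos.
  assert (HV: 0 <= V) by apply dot_ge0.
  set (e2 := eta / (2 * (V + C*C + 1))).
  assert (He2: 0 < e2) by (apply Rdiv_lt_0_compat; nra).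
  destruct (EXP F G L q r n sg v Hs Hv e2 He2) as [d0 [Hd0 HE]].
  set (d1 := eta / (2 * (P * C + Q * C * C) + 1)).
  assert (Hd1: 0 < d1) by (apply Rdiv_lt_0_compat; nra).
  set (d2 := d0 / (C + 1)). assert (Hd2: 0 < d2) by (apply Rdiv_lt_0_compat; lra).
  exists (Rmin 1 (Rmin d0 (Rmin d1 d2))). split.
  { repeat apply Rmin_pos; lra. }
  intros h t Hh Ht.
  assert (Hh1: Rabs h < 1) by (eapply Rlt_le_trans; [exact Hh| apply Rmin_l]).
  assert (Hhd0: Rabs h < d0) by (eapply Rlt_le_trans; [exact Hh|]; eapply Rle_trans; [apply Rmin_r| apply Rmin_l]).
  assert (Hhd1: Rabs h < d1) by (eapply Rlt_le_trans; [exact Hh|]; eapply Rle_trans; [apply Rmin_r|]; eapply Rle_trans; [apply Rmin_r| apply Rmin_l]).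
  assert (Hhd2: Rabs h < d2) by (eapply Rlt_le_trans; [exact Hh|]; eapply Rle_trans; [apply Rmin_r|]; eapply Rle_trans; [apply Rmin_r| apply Rmin_r]).
  assert (Hhh: h * h = Rabs h * Rabs h) by (rewrite <- Rabs_mult; rewrite Rabs_pos_eq; nra).
  assert (Hh2pos: 0 <= h * h) by nra.
  assert (Ht1: Rabs t <= C * Rabs h). { rewrite Hhh in Ht. assert (Rabs h * Rabs h <= Rabs h) by (pose proof (Rabs_pos h); nra). eapply Rle_trans. exact Ht. apply Rmult_le_compat_l; lra. }
  assert (Ht0: Rabs t < d0).
  { eapply Rle_lt_trans. exact Ht1. apply Rle_lt_trans with (C * d2). nra.
    unfold d2. apply Rlt_le_trans with ((C+1) * (d0 / (C+1))). { assert (0 < d0/(C+1)) by (apply Rdiv_lt_0_compat; lra). nra. } right; field; lra. }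
  specialize (HE h t Hhd0 Ht0). fold b tau0 V in HE.
  set (R0 := / 2 * (h * t * (dot (L v) n + dot (L n) v) + t * t * dot (L n) n)) in HE.
  assert (HR0: Rabs R0 <= / 2 * (P * C + Q * C * C) * Rabs h * (h*h)).
  { unfold R0. rewrite Rabs_mult, Rabs_pos_eq by lra.
    eapply Rle_trans. apply Rmult_le_compat_l. lra. apply Rabs_triang.
    rewrite !Rabs_mult. fold P Q.
    assert (Rabs t * Rabs t <= (C * (h*h)) * (C * Rabs h)) by (apply Rmult_le_compat; auto using Rabs_pos).
    assert (Rabs h * Rabs t * P <= Rabs h * (C * (h * h)) * P).
    { apply Rmult_le_compat_r; auto. apply Rmult_le_compat_l; auto using Rabs_pos. }
    assert (Rabs t * Rabs t * Q <= (C * (h*h)) * (C * Rabs h) * Q) by (apply Rmult_le_compat_r; auto).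
    nra. }
  assert (HR1: / 2 * (P * C + Q * C * C) * Rabs h <= eta / 2).
  { apply Rle_trans with (/2 * (P * C + Q * C * C) * d1). apply Rmult_le_compat_l. nra. lra.
    unfold d1. apply Rmult_le_reg_r with (2 * (P * C + Q * C * C) + 1). nra.
    replace (/ 2 * (P * C + Q * C * C) * (eta / (2 * (P * C + Q * C * C) + 1)) * (2 * (P * C + Q * C * C) + 1))
      with (/ 2 * (P * C + Q * C * C) * eta) by (field; nra).
    assert (0 <= P * C + Q * C * C) by nra. nra. }
  assert (HE2: e2 * (h * h * V + t * t) <= eta * (h*h) / 2).
  { assert (t * t <= C * C * (h*h)).
    { replace (t*t) with (Rabs t * Rabs t) by (rewrite <- Rabs_mult; apply Rabs_pos_eq; nra).
      assert (Rabs t * Rabs t <= (C*(h*h)) * (C * (h*h))) by (apply Rmult_le_compat; auto using Rabs_pos).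
      assert (h * h <= 1) by (rewrite Hhh; pose proof (Rabs_pos h); nra). nra. }
    unfold e2. apply Rle_trans with (eta / (2 * (V + C * C + 1)) * ((V + C*C) * (h*h))).
    apply Rmult_le_compat_l. left; apply Rdiv_lt_0_compat; nra. nra.
    unfold Rdiv. apply Rmult_le_reg_r with (2 * (V + C * C + 1)). nra.
    replace (eta * / (2 * (V + C * C + 1)) * ((V + C * C) * (h * h)) * (2 * (V + C * C + 1)))
      with (eta * ((V + C * C) * (h * h))) by (field; nra).
    replace (eta * (h * h) * / 2 * (2 * (V + C * C + 1))) with (eta * ((V + C*C + 1) * (h * h))) by field.
    apply Rmult_le_compat_l; nra. }
  replace (F (XP q v n h t) - sg * b * (t - tau0 * (h * h))) with ((F (XP q v n h t) - (sg * b * (t - tau0 * (h * h)) + R0)) + R0) by ring.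
  eapply Rle_trans. apply Rabs_triang.
  assert (Rabs R0 <= eta / 2 * (h*h)) by (eapply Rle_trans; [exact HR0|]; apply Rmult_le_compat_r; lra).
  lra. Qed.

Lemma sdata_tangent F G L q r n sg v : sdata F G L q r n sg -> dot n v = 0 -> dot (G q) v = 0.
Proof. intros Hs Hnv. destruct (sdata_facts _ _ _ _ _ _ _ Hs) as (Hn1 & Hgn & Hsg2 & Hb).
  destruct Hs as (_ & _ & _ & _ & _ & _ & Hn). subst n. rewrite dot_scall in Hnv.
  assert (sg / vnorm (G q) <> 0). { unfold Rdiv. apply Rmult_integral_contrapositive. split.
    intro; subst; lra. apply Rinv_neq_0_compat; lra. }
  apply Rmult_integral in Hnv. destruct Hnv; auto. contradiction. Qed.

Lemma ONE F1 G1 L1 r1 sg1 F2 G2 L2 r2 sg2 q n v :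
  sdata F1 G1 L1 q r1 n sg1 -> sdata F2 G2 L2 q r2 n sg2 -> dot (G1 q) v = 0 ->
  (exists rho, 0 < rho /\ forall x, ball q rho x -> F1 x = 0 -> sg2 * F2 x <= 0) ->
  tau G1 L1 q sg1 v <= tau G2 L2 q sg2 v.
Proof. intros H1 H2 Hv [rho [Hrho Hrel]].
  assert (Hnv: dot n v = 0) by exact (dot_n_v _ _ _ _ _ _ _ v H1 Hv).
  assert (Hv2: dot (G2 q) v = 0) by exact (sdata_tangent _ _ _ _ _ _ _ v H2 Hnv).
  destruct (sdata_facts _ _ _ _ _ _ _ H1) as (Hn1 & _ & _ & _).
  destruct (sdata_facts _ _ _ _ _ _ _ H2) as (_ & _ & Hsg2 & Hb2).
  set (t1 := tau G1 L1 q sg1 v). set (t2 := tau G2 L2 q sg2 v).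
  apply Rnot_lt_le. intros Hlt.
  set (eps := (t1 - t2) / 4). assert (He: 0 < eps) by (unfold eps; lra).
  destruct (HLexist F1 G1 L1 q r1 n sg1 v H1 Hv eps He) as [da [Hda HA]].
  set (C := Rabs t1 + eps). assert (HC: 0 < C) by (pose proof (Rabs_pos t1); unfold C; lra).
  set (b2 := vnorm (G2 q)) in *.
  destruct (REM F2 G2 L2 q r2 n sg2 v H2 Hv2 C (b2 * eps) HC ltac:(nra)) as [db [Hdb HB]].
  pose proof (vnorm_ge0 v).
  set (dc := rho / (2 * (vnorm v + C + 1))). assert (Hdc: 0 < dc) by (apply Rdiv_lt_0_compat; lra).
  set (h := Rmin 1 (Rmin da (Rmin db dc)) / 2).
  assert (Hm: 0 < Rmin 1 (Rmin da (Rmin db dc))) by (repeat apply Rmin_pos; lra).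
  assert (Hh0: 0 < h) by (unfold h; lra).
  assert (Hah: Rabs h = h) by (apply Rabs_pos_eq; lra).
  assert (Hh1: h < 1) by (unfold h; pose proof (Rmin_l 1 (Rmin da (Rmin db dc))); lra).
  assert (Hha: h < da) by (unfold h; pose proof (Rmin_r 1 (Rmin da (Rmin db dc))); pose proof (Rmin_l da (Rmin db dc)); lra).
  assert (Hhb: h < db) by (unfold h; pose proof (Rmin_r 1 (Rmin da (Rmin db dc))); pose proof (Rmin_r da (Rmin db dc)); pose proof (Rmin_l db dc); lra).
  assert (Hhc: h < dc) by (unfold h; pose proof (Rmin_r 1 (Rmin da (Rmin db dc))); pose proof (Rmin_r da (Rmin db dc)); pose proof (Rmin_r db dc); lra).
  destruct (HA h ltac:(rewrite Hah; lra)) as [t [Ht1 [HF1 Ht2]]]. fold t1 C in Ht2. fold t1 in Ht1.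
  assert (Hball: ball q rho (XP q v n h t)).
  { unfold ball. eapply Rle_lt_trans. apply XP_ball; auto. rewrite Hah.
    assert (Rabs t <= C * h) by (eapply Rle_trans; [exact Ht2|]; apply Rmult_le_compat_l; nra).
    apply Rle_lt_trans with (dc * (vnorm v + C)). nra.
    assert (dc * (2 * (vnorm v + C + 1)) = rho) by (unfold dc; field; lra). nra. }
  specialize (Hrel _ Hball HF1).
  specialize (HB h t ltac:(rewrite Hah; lra) Ht2). fold t2 b2 in HB.
  assert (Hs2: Rabs sg2 = 1) by (destruct H2 as (_&_&_&_&_&Hs&_); destruct Hs; subst; [apply Rabs_R1| rewrite Rabs_left; lra]).
  assert (HB': Rabs (sg2 * F2 (XP q v n h t) - b2 * (t - t2 * (h*h))) <= b2 * eps * (h*h)).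
  { replace (sg2 * F2 (XP q v n h t) - b2 * (t - t2 * (h * h))) with (sg2 * (F2 (XP q v n h t) - sg2 * b2 * (t - t2 * (h * h)))).
    rewrite Rabs_mult, Hs2. lra. replace (sg2 * (F2 (XP q v n h t) - sg2 * b2 * (t - t2 * (h * h)))) with (sg2 * F2 (XP q v n h t) - (sg2*sg2) * b2 * (t - t2 * (h * h))) by ring. rewrite Hsg2. ring. }
  assert (t - t2 * (h*h) >= 3 * eps * (h*h)).
  { assert (t1 * (h*h) - t <= eps * (h*h)) by (apply abs_bounds in Ht1; lra).
    assert (t1 - t2 = 4 * eps) by (unfold eps; field). nra. }
  assert (0 < b2 * eps * (h*h)) by (apply Rmult_lt_0_compat; nra).
  assert (b2 * (t - t2 * (h*h)) >= 3 * (b2 * eps * (h*h))) by nra.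
  apply abs_bounds in HB'. lra. Qed.

Lemma small_zero a K del : 0 < del -> (forall e, 0 < e < del -> Rabs a <= K * e) -> a = 0.
Proof. intros Hd H. destruct (Req_dec a 0); auto. exfalso.
  assert (Ha: 0 < Rabs a) by (apply Rabs_pos_lt; auto).
  assert (HK: 0 <= K). { specialize (H (del/2) ltac:(lra)). destruct (Rle_dec 0 K); auto. nra. }
  set (e := Rmin (del/2) (Rabs a / (2 * (K + 1)))).
  assert (He: 0 < e) by (apply Rmin_pos; [lra| apply Rdiv_lt_0_compat; lra]).
  specialize (H e ltac:(split; auto; unfold e; pose proof (Rmin_l (del/2) (Rabs a / (2 * (K + 1)))); lra)).
  assert (e <= Rabs a / (2 * (K + 1))) by apply Rmin_r.
  assert (e * (2 * (K+1)) <= Rabs a).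
  { apply Rmult_le_reg_r with (/ (2 * (K+1))). apply Rinv_0_lt_compat; lra.
    replace (e * (2 * (K + 1)) * / (2 * (K + 1))) with e by (field; lra). unfold Rdiv in H0. lra. }
  nra. Qed.

Lemma taylor1 F G L q r : 0 < r -> (forall x, ball q r x -> has_grad F x (G x)) -> has_deriv G q L ->
  exists K del, 0 <= K /\ 0 < del /\ forall w, vnorm w < del -> Rabs (F (vadd q w) - F q - dot (G q) w) <= K * (vnorm w * vnorm w).
Proof. intros Hr Hg HD. destruct (taylor2 F G L q r Hr Hg HD 1 Rlt_0_1) as [d [Hd HT]].
  destruct HD as [HL _]. destruct (lin_bound L HL) as [K [HK HLK]].
  exists (1 + K). exists d. split. lra. split; auto. intros w Hw. specialize (HT w Hw).
  pose proof (CS (L w) w). pose proof (HLK w). pose proof (vnorm_ge0 w).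
  assert (Rabs (dot (L w) w) <= K * vnorm w * vnorm w).
  { eapply Rle_trans. exact H. apply Rmult_le_compat_r; auto. }
  replace (F (vadd q w) - F q - dot (G q) w) with ((F (vadd q w) - F q - dot (G q) w - / 2 * dot (L w) w) + /2 * dot (L w) w) by ring.
  eapply Rle_trans. apply Rabs_triang. rewrite Rabs_mult, (Rabs_pos_eq (/2)) by lra. nra. Qed.

Lemma PAR F1 G1 L1 r1 sg1 n q v F2 G2 L2 r2 s :
  sdata F1 G1 L1 q r1 n sg1 -> dot (G1 q) v = 0 ->
  0 < r2 -> (forall x, ball q r2 x -> has_grad F2 x (G2 x)) -> has_deriv G2 q L2 -> F2 q = 0 ->
  (exists rho, 0 < rho /\ forall x, ball q rho x -> F1 x = 0 -> 0 <= s * F2 x) ->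
  s * dot (G2 q) v = 0.
Proof. intros H1 Hv Hr2 Hg2 HD2 HF2 [rho [Hrho Hrel]].
  destruct (sdata_facts _ _ _ _ _ _ _ H1) as (Hn1 & _ & _ & _).
  destruct (taylor1 F2 G2 L2 q r2 Hr2 Hg2 HD2) as [K [dT [HK [HdT HT]]]].
  destruct (HLexist F1 G1 L1 q r1 n sg1 v H1 Hv 1 Rlt_0_1) as [da [Hda HA]].
  set (C := Rabs (tau G1 L1 q sg1 v) + 1). assert (HC: 0 < C) by (pose proof (Rabs_pos (tau G1 L1 q sg1 v)); unfold C; lra).
  pose proof (vnorm_ge0 v). set (g2 := G2 q).
  set (M := K * (vnorm v + C) * (vnorm v + C) + C * vnorm g2).
  assert (HM: 0 <= M) by (unfold M; pose proof (vnorm_ge0 g2); apply Rplus_le_le_0_compat; [apply Rmult_le_pos; [apply Rmult_le_pos|]|apply Rmult_le_pos]; lra).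
  set (del := Rmin 1 (Rmin da (Rmin (dT / (vnorm v + C + 1)) (rho / (vnorm v + C + 1))))).
  assert (Hdel: 0 < del) by (repeat apply Rmin_pos; try apply Rdiv_lt_0_compat; lra).
  assert (Key: forall h, 0 < Rabs h < del -> - (Rabs s * M * (h*h)) <= s * h * dot g2 v).
  { intros h [Hh0 Hh].
    assert (Hh1: Rabs h < 1) by (eapply Rlt_le_trans; [exact Hh| apply Rmin_l]).
    assert (Hha: Rabs h < da) by (eapply Rlt_le_trans; [exact Hh|]; eapply Rle_trans; [apply Rmin_r| apply Rmin_l]).
    assert (HhT: Rabs h < dT / (vnorm v + C + 1)) by (eapply Rlt_le_trans; [exact Hh|]; eapply Rle_trans; [apply Rmin_r|]; eapply Rle_trans; [apply Rmin_r| apply Rmin_l]).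
    assert (Hhr: Rabs h < rho / (vnorm v + C + 1)) by (eapply Rlt_le_trans; [exact Hh|]; eapply Rle_trans; [apply Rmin_r|]; eapply Rle_trans; [apply Rmin_r| apply Rmin_r]).
    destruct (HA h (conj Hh0 Hha)) as [t [_ [HF1 Ht]]]. fold C in Ht.
    assert (Hhh: h * h = Rabs h * Rabs h) by (rewrite <- Rabs_mult; rewrite Rabs_pos_eq; nra).
    assert (Ht': Rabs t <= C * Rabs h) by (rewrite Hhh in Ht; eapply Rle_trans; [exact Ht|]; pose proof (Rabs_pos h); apply Rmult_le_compat_l; nra).
    set (w := vadd (vscal h v) (vscal t n)).
    assert (Hw: vnorm w <= (vnorm v + C) * Rabs h).
    { unfold w. eapply Rle_trans. apply vnorm_triangle. rewrite !vnorm_scal, Hn1. nra. }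
    assert (Hwd: forall d, Rabs h < d / (vnorm v + C + 1) -> vnorm w < d).
    { intros d Hd. eapply Rle_lt_trans. exact Hw. apply Rle_lt_trans with ((vnorm v + C + 1) * Rabs h). pose proof (Rabs_pos h); nra.
      apply Rmult_lt_reg_r with (/ (vnorm v + C + 1)). apply Rinv_0_lt_compat; lra.
      replace ((vnorm v + C + 1) * Rabs h * / (vnorm v + C + 1)) with (Rabs h) by (field; lra). exact Hd. }
    assert (HX: XP q v n h t = vadd q w) by reflexivity.
    assert (Hball: ball q rho (XP q v n h t)).
    { unfold ball. rewrite HX, vadd_sub_cancel. apply Hwd; auto. }
    specialize (Hrel _ Hball HF1). rewrite HX in Hrel.
    specialize (HT w (Hwd dT HhT)). rewrite HF2 in HT.
    assert (Hdot: dot g2 w = h * dot g2 v + t * dot g2 n) by (unfold w; rewrite dot_addr, !dot_scalr; ring).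
    assert (Hw2: vnorm w * vnorm w <= (vnorm v + C) * (vnorm v + C) * (h*h)).
    { rewrite Hhh. pose proof (vnorm_ge0 w). assert (0 <= (vnorm v + C) * Rabs h) by (pose proof (Rabs_pos h); nra). nra. }
    assert (Htn: Rabs (t * dot g2 n) <= C * vnorm g2 * (h*h)).
    { rewrite Rabs_mult. pose proof (CS g2 n). rewrite Hn1 in H0.
      assert (Rabs t <= C * (h*h)) by exact Ht.
      assert (Rabs t * Rabs (dot g2 n) <= (C * (h*h)) * (vnorm g2 * 1)) by (apply Rmult_le_compat; auto using Rabs_pos).
      nra. }
    assert (HF2b: Rabs (F2 (vadd q w) - h * dot g2 v) <= M * (h*h)).
    { replace (F2 (vadd q w) - h * dot g2 v) with ((F2 (vadd q w) - 0 - dot (G2 q) w) + t * dot g2 n) by (fold g2; rewrite Hdot; ring).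
      eapply Rle_trans. apply Rabs_triang. unfold M.
      assert (K * (vnorm w * vnorm w) <= K * ((vnorm v + C) * (vnorm v + C) * (h * h))) by (apply Rmult_le_compat_l; auto).
      nra. }
    apply abs_bounds in HF2b.
    assert (Hs: s * F2 (vadd q w) - s * (h * dot g2 v) <= Rabs s * (M * (h*h))).
    { replace (s * F2 (vadd q w) - s * (h * dot g2 v)) with (s * (F2 (vadd q w) - h * dot g2 v)) by ring.
      eapply Rle_trans. apply Rle_abs. rewrite Rabs_mult. apply Rmult_le_compat_l. apply Rabs_pos.
      apply Rabs_le. lra. }
    lra. }
  apply (small_zero _ (Rabs s * M) del Hdel).
  intros e He. fold g2.
  assert (He1: e < 1) by (pose proof (Rmin_l 1 (Rmin da (Rmin (dT / (vnorm v + C + 1)) (rho / (vnorm v + C + 1))))); fold del in H0; lra).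
  pose proof (Key e ltac:(rewrite Rabs_pos_eq; lra)).
  pose proof (Key (-e) ltac:(rewrite Rabs_Ropp, Rabs_pos_eq; lra)).
  assert (- (Rabs s * M * e) <= s * dot g2 v).
  { apply Rmult_le_reg_r with e. lra. nra. }
  assert (- (Rabs s * M * e) <= - (s * dot g2 v)).
  { apply Rmult_le_reg_r with e. lra. nra. }
  apply Rabs_le. lra. Qed.

Lemma has_deriv_extL F x L L' : has_deriv F x L -> (forall h, L h = L' h) -> has_deriv F x L'.
Proof. intros [[A S] H] E. split. split; intros; rewrite <- !E; auto.
  intros eps He. destruct (H eps He) as [d [Hd H']]. exists d. split; auto. intros h Hh. rewrite <- E. auto. Qed.

Lemma ball_center q r : 0 < r -> ball q r q.
Proof. intros. unfold ball. replace (vsub q q) with vzero by veq. rewrite vnorm_zero. auto. Qed.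

Lemma ll_sdata M q r F G sg : local_level M q r F G -> M q -> (sg = 1 \/ sg = -1) ->
  exists L, sdata F G L q r (vscal (sg / vnorm (G q)) (G q)) sg /\
     (forall x, ball q r x -> (M x <-> F x = 0)).
Proof. intros (Hr & [Hg [DG [HD _]]] & Hnz & HM) Hq Hsg.
  assert (Hq': ball q r q) by (apply ball_center; auto).
  exists (DG q). split; auto.
  refine (conj Hr (conj Hg (conj (HD q Hq') (conj _ (conj (Hnz q Hq') (conj Hsg eq_refl)))))).
  apply HM; auto. Qed.

Lemma N_eq sg y : vscal (sg / vnorm y) y = vscal sg (U y).
Proof. unfold U. veq. Qed.

Lemma shape_exists M q r F G sg : local_level M q r F G -> M q -> (sg = 1 \/ sg = -1) ->
  exists S, shape_op M q (vscal (sg / vnorm (G q)) (G q)) S.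
Proof. intros Hll Hq Hsg. pose proof Hll as (Hr & [Hg [DG [HD _]]] & Hnz & HM).
  exists (fun v => vscal (- sg) (DU (G q) (DG q v))).
  split; auto. exists r, F, G. split; auto. exists sg. split; auto. cbv zeta. split; auto.
  assert (Hq': ball q r q) by (apply ball_center; auto).
  pose proof (has_deriv_scal _ _ _ sg (has_deriv_U G q (DG q) (HD q Hq') (Hnz q Hq'))) as H.
  eapply has_deriv_ext. eapply has_deriv_extL. exact H.
  intros h. simpl. veq. intros z. simpl. rewrite N_eq. reflexivity. Qed.

Lemma shape_val M q n S : shape_op M q n S ->
  exists F G L r sg, local_level M q r F G /\ sdata F G L q r n sg /\
    forall v, dot (G q) v = 0 -> dot (S v) v = 2 * tau G L q sg v.
Proof. intros [Hq [r [F [G [Hll [sg [Hsg HN]]]]]]]. cbv zeta in HN. destruct HN as [Hn HDN].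
  destruct (ll_sdata M q r F G sg Hll Hq Hsg) as [L [Hs _]].
  exists F, G, L, r, sg. split; auto. rewrite <- Hn. split; auto.
  intros v Hv. pose proof Hs as (Hr & Hg & HD & HF & Hg0 & _ & _).
  pose proof (has_deriv_scal _ _ _ sg (has_deriv_U G q L HD Hg0)) as H.
  assert (H': has_deriv (fun x => vscal (sg / vnorm (G x)) (G x)) q (fun h => vscal sg (DU (G q) (L h)))).
  { eapply has_deriv_ext. exact H. intros z. rewrite N_eq. reflexivity. }
  pose proof (deriv_unique _ _ _ _ HDN H' v) as E.
  assert (E2: dot (vscal (-1) (S v)) v = dot (vscal sg (DU (G q) (L v))) v) by (rewrite E; reflexivity).
  rewrite !dot_scall in E2. unfold DU in E2. rewrite dot_subl, !dot_scall, Hv in E2.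
  pose proof (vnorm_pos _ Hg0). unfold tau. rewrite (dot_comm (G q) (L v)) in E2.
  replace (dot (S v) v) with (- (-1 * dot (S v) v)) by ring. rewrite E2. field. lra. Qed.

Lemma TP M q r0 F0 G0 L0 n sg0 : sdata F0 G0 L0 q r0 n sg0 -> local_level M q r0 F0 G0 ->
  forall v, tangent_plane M q v <-> dot n v = 0.
Proof. intros Hs0 Hll0 v. split.
  - intros [Hq [r1 [F1 [G1 [Hll1 Hv1]]]]].
    destruct (ll_sdata M q r1 F1 G1 1 Hll1 Hq (or_introl eq_refl)) as [L1 [Hs1 HM1]].
    pose proof Hs0 as (Hr0 & Hg0 & HD0 & HF0 & Hnz0 & Hsg0 & Hn0).
    pose proof Hll0 as (_ & _ & _ & HM0).
    assert (E: 1 * dot (G0 q) v = 0).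
    { eapply (PAR F1 G1 L1 r1 1 _ q v F0 G0 L0 r0 1 Hs1 Hv1 Hr0 Hg0 HD0 HF0).
      exists (Rmin r0 r1). split. apply Rmin_pos; destruct Hs1; lra.
      intros x Hx Hf. assert (Hx0: ball q r0 x) by (unfold ball in *; eapply Rlt_le_trans; [exact Hx| apply Rmin_l]).
      assert (Hx1: ball q r1 x) by (unfold ball in *; eapply Rlt_le_trans; [exact Hx| apply Rmin_r]).
      apply HM1 in Hf; auto. apply HM0 in Hf; auto. rewrite Hf. lra. }
    rewrite Hn0, dot_scall. replace (dot (G0 q) v) with 0 by lra. ring.
  - intros Hnv. split. destruct Hll0 as (Hr & _ & _ & HM). apply HM. apply ball_center; auto. destruct Hs0 as (_&_&_&?&_); auto.
    exists r0, F0, G0. split; auto. eapply sdata_tangent; eauto. Qed.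

Lemma SAME M q r1 F1 G1 L1 sg1 r2 F2 G2 L2 sg2 n v :
  local_level M q r1 F1 G1 -> sdata F1 G1 L1 q r1 n sg1 ->
  local_level M q r2 F2 G2 -> sdata F2 G2 L2 q r2 n sg2 -> dot n v = 0 ->
  tau G1 L1 q sg1 v = tau G2 L2 q sg2 v.
Proof. intros Hl1 Hs1 Hl2 Hs2 Hnv.
  assert (Hr1: 0 < r1) by (destruct Hs1; auto). assert (Hr2: 0 < r2) by (destruct Hs2; auto).
  destruct Hl1 as (_ & _ & _ & HM1). destruct Hl2 as (_ & _ & _ & HM2).
  assert (Hrho: 0 < Rmin r1 r2) by (apply Rmin_pos; auto).
  assert (B: forall x, ball q (Rmin r1 r2) x -> ball q r1 x /\ ball q r2 x).
  { intros x Hx; unfold ball in *; split; eapply Rlt_le_trans; try exact Hx; [apply Rmin_l| apply Rmin_r]. }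
  apply Rle_antisym.
  - eapply ONE; eauto. eapply sdata_tangent; eauto.
    exists (Rmin r1 r2). split; auto. intros x Hx Hf. destruct (B x Hx).
    apply HM1 in Hf; auto. apply HM2 in Hf; auto. rewrite Hf. lra.
  - eapply ONE; eauto. eapply sdata_tangent; eauto.
    exists (Rmin r1 r2). split; auto. intros x Hx Hf. destruct (B x Hx).
    apply HM2 in Hf; auto. apply HM1 in Hf; auto. rewrite Hf. lra. Qed.

Lemma ball_shift q r x h : ball q r x -> vnorm h < r - vnorm (vsub x q) -> ball q r (vadd x h).
Proof. unfold ball. intros Hx Hh. replace (vsub (vadd x h) q) with (vadd (vsub x q) h) by veq.
  eapply Rle_lt_trans. apply vnorm_triangle. lra. Qed.

Lemma ball_sym x r y : ball x r y -> vnorm (vsub y x) < r.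
Proof. auto. Qed.

Lemma ldf_ll D q r F G : local_def_fn D q r F G -> local_level (boundary D) q r F G.
Proof. intros (Hr & HC2 & Hnz & HD). pose proof HC2 as [Hg _].
  split; auto. split; auto. split; auto. intros x Hx.
  set (rho := r - vnorm (vsub x q)). assert (Hrho: 0 < rho) by (unfold rho, ball in *; lra).
  split.
  - intros [Hcl Hcl'].
    assert (Hc: forall e, 0 < e -> exists d, 0 < d /\ forall y, vnorm (vsub y x) < d -> ball q r y /\ Rabs (F y - F x) <= e).
    { intros e He. destruct (grad_cont F x (G x) (Hg x Hx) e He) as [d [Hd Hd']].
      exists (Rmin d rho). split. apply Rmin_pos; auto. intros y Hy.
      replace y with (vadd x (vsub y x)) by veq. split.
      apply ball_shift; auto. eapply Rlt_le_trans; [exact Hy| apply Rmin_r].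
      apply Hd'. eapply Rlt_le_trans; [exact Hy| apply Rmin_l]. }
    destruct (Rtotal_order (F x) 0) as [Hlt|[Heq|Hgt]]; auto; exfalso.
    + destruct (Hc (- F x / 2) ltac:(lra)) as [d [Hd Hd']].
      destruct (Hcl' d Hd) as [y [Hy1 Hy2]]. destruct (Hd' y Hy2) as [Hyb Hy].
      apply Hy1. apply HD; auto. apply abs_bounds in Hy. lra.
    + destruct (Hc (F x / 2) ltac:(lra)) as [d [Hd Hd']].
      destruct (Hcl d Hd) as [y [Hy1 Hy2]]. destruct (Hd' y Hy2) as [Hyb Hy].
      apply HD in Hy1; auto. apply abs_bounds in Hy. lra.
  - intros HF0. pose proof (vnorm_pos _ (Hnz x Hx)) as Hb. set (g := G x) in *.
    destruct (Hg x Hx (vnorm g / 2) ltac:(lra)) as [d [Hd Hd']].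
    assert (Hpt: forall e, 0 < e -> forall sgn, (sgn = 1 \/ sgn = -1) -> exists y, ball q r y /\ ball x e y /\ sgn * F y > 0).
    { intros e He sgn Hsgn.
      set (t := Rmin e (Rmin d rho) / (2 * vnorm g)).
      assert (Ht: 0 < t) by (unfold t; apply Rdiv_lt_0_compat; [repeat apply Rmin_pos|]; lra).
      assert (Hh: vnorm (vscal (sgn * t) g) = t * vnorm g).
      { rewrite vnorm_scal, Rabs_mult, (Rabs_pos_eq t) by lra. destruct Hsgn; subst; [rewrite Rabs_R1| rewrite Rabs_left]; lra. }
      assert (Htg: t * vnorm g = Rmin e (Rmin d rho) / 2) by (unfold t; field; lra).
      pose proof (Rmin_l e (Rmin d rho)). pose proof (Rmin_r e (Rmin d rho)). pose proof (Rmin_l d rho). pose proof (Rmin_r d rho).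
      pose proof (Rmin_pos e (Rmin d rho) He (Rmin_pos d rho Hd Hrho)).
      exists (vadd x (vscal (sgn * t) g)). split; [|split].
      - apply ball_shift; auto. fold rho. lra.
      - unfold ball. rewrite vadd_sub_cancel. lra.
      - specialize (Hd' (vscal (sgn * t) g) ltac:(lra)). rewrite HF0, dot_scalr, <- vnorm_sq, Hh in Hd'.
        apply abs_bounds in Hd'. destruct Hsgn; subst sgn; nra. }
    split.
    + intros e He. destruct (Hpt e He (-1) (or_intror eq_refl)) as [y [Hy1 [Hy2 Hy3]]].
      exists y. split; auto. apply HD; auto. lra.
    + intros e He. destruct (Hpt e He 1 (or_introl eq_refl)) as [y [Hy1 [Hy2 Hy3]]].
      exists y. split; auto. intro HDy. apply HD in HDy; auto. lra. Qed.

Lemma norm_convex u w t : 0 <= t <= 1 ->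
  vnorm (vadd (vscal (1 - t) u) (vscal t w)) <= (1 - t) * vnorm u + t * vnorm w.
Proof. intros Ht. eapply Rle_trans. apply vnorm_triangle. rewrite !vnorm_scal, !Rabs_pos_eq by lra. lra. Qed.

Lemma phi_convex a b y y' t : 0 <= t <= 1 ->
  phi (vadd a (vscal t (vsub b a))) y y' <= (1 - t) * phi a y y' + t * phi b y y'.
Proof. intros Ht. unfold phi.
  replace (vsub y (vadd a (vscal t (vsub b a)))) with (vadd (vscal (1 - t) (vsub y a)) (vscal t (vsub y b))) by veq.
  replace (vsub (vadd a (vscal t (vsub b a))) y') with (vadd (vscal (1 - t) (vsub a y')) (vscal t (vsub b y'))) by veq.
  pose proof (norm_convex (vsub y a) (vsub y b) t Ht). pose proof (norm_convex (vsub a y') (vsub b y') t Ht). lra. Qed.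

Lemma phi_lower x y y' : vnorm (vsub y y') <= phi x y y'.
Proof. unfold phi. apply vnorm_sub_tri. Qed.

Lemma in_closure (D : R3 -> Prop) x : D x -> closure D x.
Proof. intros H r Hr. exists x. split; auto. unfold ball. replace (vsub x x) with vzero by veq. rewrite vnorm_zero; auto. Qed.

Lemma ncl_open (D : R3 -> Prop) y : ~ closure D y -> exists r, 0 < r /\ forall z, vnorm (vsub z y) < r -> ~ closure D z.
Proof. intros H. unfold closure in H.
  assert (exists r, 0 < r /\ forall w, D w -> ~ ball y r w).
  { apply Classical_Prop.NNPP. intro Hn. apply H. intros r Hr. apply Classical_Prop.NNPP. intro Hn2.
    apply Hn. exists r. split; auto. intros w Hw Hb. apply Hn2. exists w. auto. }
  destruct H0 as [r [Hr Hw]]. exists (r/2). split. lra.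
  intros z Hz Hcl. destruct (Hcl (r/2) ltac:(lra)) as [w [Hw1 Hw2]]. apply (Hw w Hw1).
  unfold ball in *. eapply Rle_lt_trans. apply (vnorm_sub_tri w z y). lra. Qed.

Lemma gamma_dist p x u t : vnorm (vsub (vadd p (vscal u (vsub x p))) (vadd p (vscal t (vsub x p)))) = Rabs (u - t) * vnorm (vsub x p).
Proof. replace (vsub (vadd p (vscal u (vsub x p))) (vadd p (vscal t (vsub x p)))) with (vscal (u - t) (vsub x p)) by veq.
  apply vnorm_scal. Qed.

Lemma closure_phi (D : R3 -> Prop) p p' c x :
  ~ closure D p -> (forall z, boundary D z -> c <= phi z p p') -> vnorm (vsub p p') <= c ->
  closure D x -> c <= phi x p p'.
Proof. intros Hp Hc Hpp Hx. apply Rnot_lt_le. intros Hlt.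
  set (gam := fun t => vadd p (vscal t (vsub x p))).
  set (E := fun t => 0 <= t <= 1 /\ forall u, 0 <= u <= t -> ~ closure D (gam u)).
  assert (HE0: E 0).
  { split. lra. intros u Hu. replace u with 0 by lra. unfold gam. replace (vadd p (vscal 0 (vsub x p))) with p by veq. auto. }
  assert (Hbd: bound E) by (exists 1; intros t [Ht _]; lra).
  destruct (completeness E Hbd (ex_intro _ 0 HE0)) as [ts [Hub Hlub]].
  assert (Hts0: 0 <= ts) by (apply Hub; auto).
  assert (Hts1: ts <= 1) by (apply Hlub; intros t [Ht _]; lra).
  assert (Hbelow: forall u, 0 <= u < ts -> ~ closure D (gam u)).
  { intros u Hu. apply Classical_Prop.NNPP. intro Hn.
    assert (Hup: is_upper_bound E u).
    { intros t [Ht Ht']. apply Rnot_lt_le. intros Hut. apply (Ht' u). lra. apply Classical_Prop.NNPP; auto. }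
    specialize (Hlub u Hup). lra. }
  assert (Hxp: 0 <= vnorm (vsub x p)) by apply vnorm_ge0.
  assert (Hcl: closure D (gam ts)).
  { apply Classical_Prop.NNPP. intro Hn. destruct (ncl_open D _ Hn) as [r [Hr Hr']].
    destruct (Req_dec ts 1) as [E1|E1].
    { apply Hn. unfold gam. rewrite E1. replace (vadd p (vscal 1 (vsub x p))) with x by veq. auto. }
    set (ts' := Rmin 1 (ts + r / (2 * (vnorm (vsub x p) + 1)))).
    assert (Hd: 0 < r / (2 * (vnorm (vsub x p) + 1))) by (apply Rdiv_lt_0_compat; lra).
    assert (Hts': ts < ts') by (unfold ts'; apply Rmin_glb_lt; lra).
    assert (HEts': E ts').
    { split. split. lra. apply Rmin_l. intros u Hu. destruct (Rlt_dec u ts). apply Hbelow; lra.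
      apply Hr'. unfold gam. rewrite gamma_dist.
      assert (Rabs (u - ts) <= r / (2 * (vnorm (vsub x p) + 1))).
      { rewrite Rabs_pos_eq by lra. assert (ts' <= ts + r / (2 * (vnorm (vsub x p) + 1))) by apply Rmin_r. lra. }
      apply Rle_lt_trans with (r / (2 * (vnorm (vsub x p) + 1)) * vnorm (vsub x p)).
      apply Rmult_le_compat_r; auto.
      apply Rmult_lt_reg_r with (2 * (vnorm (vsub x p) + 1)). lra.
      replace (r / (2 * (vnorm (vsub x p) + 1)) * vnorm (vsub x p) * (2 * (vnorm (vsub x p) + 1))) with (r * vnorm (vsub x p)) by (field; lra).
      nra. }
    specialize (Hub ts' HEts'). lra. }
  assert (Htspos: 0 < ts).
  { destruct Hts0 as [|E0]; auto. exfalso. apply Hp. rewrite <- E0 in Hcl. unfold gam in Hcl.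
    replace (vadd p (vscal 0 (vsub x p))) with p in Hcl by veq. auto. }
  assert (Hbdry: boundary D (gam ts)).
  { split; auto. intros e He.
    set (u := Rmax 0 (ts - e / (2 * (vnorm (vsub x p) + 1)))).
    assert (Hd: 0 < e / (2 * (vnorm (vsub x p) + 1))) by (apply Rdiv_lt_0_compat; lra).
    assert (Hu0: 0 <= u) by apply Rmax_l.
    assert (Hu1: u < ts) by (unfold u; apply Rmax_lub_lt; lra).
    exists (gam u). split.
    - intro HD. apply (Hbelow u); auto. apply in_closure; auto.
    - unfold ball, gam. rewrite gamma_dist.
      assert (Rabs (u - ts) <= e / (2 * (vnorm (vsub x p) + 1))).
      { rewrite Rabs_left1 by lra. assert (ts - e / (2 * (vnorm (vsub x p) + 1)) <= u) by apply Rmax_r. lra. }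
      apply Rle_lt_trans with (e / (2 * (vnorm (vsub x p) + 1)) * vnorm (vsub x p)).
      apply Rmult_le_compat_r; auto.
      apply Rmult_lt_reg_r with (2 * (vnorm (vsub x p) + 1)). lra.
      replace (e / (2 * (vnorm (vsub x p) + 1)) * vnorm (vsub x p) * (2 * (vnorm (vsub x p) + 1))) with (e * vnorm (vsub x p)) by (field; lra).
      nra. }
  specialize (Hc _ Hbdry). unfold gam in Hc.
  pose proof (phi_convex p x p p' ts ltac:(lra)).
  assert (phi p p p' = vnorm (vsub p p')).
  { unfold phi. replace (vsub p p) with vzero by veq. rewrite vnorm_zero. ring. }
  nra. Qed.

Lemma tri_eq a b : vnorm (vadd a b) = vnorm a + vnorm b -> vscal (vnorm b) a = vscal (vnorm a) b.
Proof. intros H.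
  assert (Hd: dot a b = vnorm a * vnorm b).
  { assert (vnorm (vadd a b) * vnorm (vadd a b) = (vnorm a + vnorm b) * (vnorm a + vnorm b)) by (rewrite H; auto).
    rewrite vnorm_sq, dot_vadd_self in H0. rewrite <- (vnorm_sq a), <- (vnorm_sq b) in H0. lra. }
  assert (Hz: dot (vsub (vscal (vnorm b) a) (vscal (vnorm a) b)) (vsub (vscal (vnorm b) a) (vscal (vnorm a) b)) = 0).
  { rewrite !dot_subl, !dot_subr, !dot_scall, !dot_scalr, (dot_comm b a), Hd, <- (vnorm_sq a), <- (vnorm_sq b). ring. }
  apply dot_eq0 in Hz. rewrite <- (vsub_add (vscal (vnorm b) a) (vscal (vnorm a) b)), Hz. veq. Qed.

Lemma on_segment p p' q : vnorm (vsub p q) + vnorm (vsub q p') = vnorm (vsub p p') -> segment p p' q.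
Proof. intros H. set (a := vsub p q). set (b := vsub q p').
  assert (Hab: vadd a b = vsub p p') by (unfold a, b; veq).
  rewrite <- Hab in H. fold a b in H. symmetry in H. pose proof (tri_eq a b H) as E.
  pose proof (vnorm_ge0 a). pose proof (vnorm_ge0 b).
  destruct (Req_dec (vnorm a + vnorm b) 0) as [Z|Z].
  - assert (vnorm a = 0) by lra. assert (vnorm b = 0) by lra.
    apply vnorm_eq0 in H2. apply vnorm_eq0 in H3. exists 0. split. lra.
    unfold a, b in *. replace q with (vsub p (vsub p q)) by veq. rewrite H2. veq.
  - exists (vnorm a / (vnorm a + vnorm b)). split. split. unfold Rdiv; apply Rmult_le_pos; [lra| left; apply Rinv_0_lt_compat; lra].
    apply Rmult_le_reg_r with (vnorm a + vnorm b). lra. unfold Rdiv. rewrite Rmult_assoc, Rinv_l by lra. lra.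
    assert (E2: vscal (vnorm a + vnorm b) a = vscal (vnorm a) (vadd a b)).
    { replace (vscal (vnorm a + vnorm b) a) with (vadd (vscal (vnorm a) a) (vscal (vnorm b) a)) by veq.
      rewrite E. veq. }
    rewrite Hab in E2.
    assert (Hq: q = vsub p a) by (unfold a; veq). rewrite Hq.
    assert (a = vscal (vnorm a / (vnorm a + vnorm b)) (vsub p p')).
    { replace (vscal (vnorm a / (vnorm a + vnorm b)) (vsub p p')) with (vscal (/ (vnorm a + vnorm b)) (vscal (vnorm a) (vsub p p'))) by (unfold Rdiv; veq).
      rewrite <- E2. vsplit; field; lra. }
    rewrite H2 at 1. veq. Qed.

Lemma vneq_of_norm x y : 0 < vnorm (vsub x y) -> x <> y.
Proof. intros H E. subst. replace (vsub y y) with vzero in H by veq. rewrite vnorm_zero in H. lra. Qed.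

Lemma ps_E p' q s r : r <> 0 ->
  vsub q (vadd p' (vscal s (vscal (/ r) (vsub q p')))) = vscal ((r - s) / r) (vsub q p').
Proof. intros Hr. vsplit; field; auto. Qed.

Lemma ps_facts p' q s : 0 < s < vnorm (vsub q p') ->
  let A' := vscal (/ vnorm (vsub q p')) (vsub q p') in
  let p's := vadd p' (vscal s A') in
  vsub q p's = vscal ((vnorm (vsub q p') - s) / vnorm (vsub q p')) (vsub q p') /\
  vnorm (vsub q p's) = vnorm (vsub q p') - s /\ vnorm (vsub p's p') = s /\ vnorm A' = 1.
Proof. intros Hs A' p's.
  assert (E: vsub q p's = vscal ((vnorm (vsub q p') - s) / vnorm (vsub q p')) (vsub q p')) by (apply ps_E; lra).
  set (r := vnorm (vsub q p')) in *.
  assert (Hr: 0 < r) by lra.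
  assert (HA: vnorm A' = 1) by (unfold A'; rewrite vnorm_scal, Rabs_pos_eq; [fold r; field; lra| left; apply Rinv_0_lt_compat; lra]).
  split; auto. split.
  - rewrite E, vnorm_scal. fold r. rewrite Rabs_pos_eq. field; lra. unfold Rdiv; apply Rmult_le_pos; [lra| left; apply Rinv_0_lt_compat; lra].
  - split; auto. unfold p's. replace (vsub (vadd p' (vscal s A')) p') with (vscal s A') by veq.
    rewrite vnorm_scal, HA, Rabs_pos_eq; lra. Qed.

Lemma phi_at_focus p p' : phi p' p p' = vnorm (vsub p p').
Proof. unfold phi. replace (vsub p' p') with vzero by veq. rewrite vnorm_zero. ring. Qed.

Lemma lambda_part (D : R3 -> Prop) p p' c s q :
  (forall z, boundary D z -> c <= phi z p p') -> vnorm (vsub p p') < c ->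
  boundary D q -> phi q p p' = c -> 0 < s < vnorm (vsub q p') ->
  let A' := vscal (/ vnorm (vsub q p')) (vsub q p') in
  let p's := vadd p' (vscal s A') in
  forall x, Lambda D p p's x <-> x = q.
Proof. intros Hc Hpp Hq Hphq Hs A' p's.
  destruct (ps_facts p' q s Hs) as (E1 & E2 & E3 & E4). fold A' p's in E1, E2, E3, E4.
  set (r := vnorm (vsub q p')) in *. assert (Hr: 0 < r) by lra.
  assert (Hq': phi q p p's = c - s) by (unfold phi in Hphq |- *; fold r in Hphq; rewrite E2; lra).
  assert (F4: forall x, phi x p p' - s <= phi x p p's).
  { intros x. unfold phi. pose proof (vnorm_sub_tri x p's p'). lra. }
  intros x. split.
  - intros [Hx Hmin]. specialize (Hmin q Hq). rewrite Hq' in Hmin.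
    pose proof (Hc x Hx). pose proof (F4 x).
    assert (Hphx: phi x p p' = c) by lra.
    assert (Heq: vnorm (vsub x p') = vnorm (vsub x p's) + s).
    { unfold phi in *. pose proof (vnorm_sub_tri x p's p'). lra. }
    set (a := vsub x p's). set (b := vsub p's p').
    assert (Hab: vadd a b = vsub x p') by (unfold a, b; veq).
    rewrite <- Hab in Heq. fold a in Heq. rewrite <- E3 in Heq. fold b in Heq, E3.
    pose proof (tri_eq a b Heq) as TE. rewrite E3 in TE.
    assert (Hb: b = vscal s A') by (unfold b, p's; veq).
    rewrite Hb in TE.
    assert (Ha: a = vscal (vnorm a) A').
    { assert (vscal (/ s) (vscal s a) = vscal (/ s) (vscal (vnorm a) (vscal s A'))) by (rewrite TE; auto).
      rewrite vscal_inv in H1 by lra. rewrite H1 at 1. rewrite !vscal_assoc. f_equal. field. lra. }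
    set (T := s + vnorm a). pose proof (vnorm_ge0 a).
    assert (HxT: x = vadd p' (vscal T A')).
    { replace x with (vadd p's a) by (unfold a; veq). rewrite Ha. unfold p's, T. veq. }
    assert (HqA: q = vadd p' (vscal r A')).
    { unfold A'. fold r. clear - Hr. vsplit; field; lra. }
    destruct (Rtotal_order T r) as [Hlt|[HeqT|Hgt]].
    + exfalso. assert (Hxq: x = vadd p' (vscal (T / r) (vsub q p'))).
      { rewrite HxT. unfold A'. fold r. clear - Hr. vsplit; field; lra. }
      pose proof (phi_convex p' q p p' (T / r)) as HC.
      assert (0 <= T / r <= 1). { split. unfold T; apply Rdiv_le_0_compat'; lra. apply Rmult_le_reg_r with r; auto. unfold Rdiv. rewrite Rmult_assoc, Rinv_l by lra. lra. }
      specialize (HC H2). rewrite <- Hxq, phi_at_focus, Hphq, Hphx in HC.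
      assert (T / r < 1). { apply Rmult_lt_reg_r with r; auto. unfold Rdiv. rewrite Rmult_assoc, Rinv_l by lra. lra. }
      nra.
    + rewrite HxT, HqA, HeqT. reflexivity.
    + exfalso. assert (Hqx: q = vadd p' (vscal (r / T) (vsub x p'))).
      { rewrite HxT. rewrite HqA at 1. replace (vsub (vadd p' (vscal T A')) p') with (vscal T A') by veq.
        rewrite vscal_assoc. f_equal. f_equal. field. lra. }
      assert (HT: 0 < T) by lra.
      pose proof (phi_convex p' x p p' (r / T)) as HC.
      assert (0 <= r / T <= 1). { split. apply Rdiv_le_0_compat'; lra. apply Rmult_le_reg_r with T; auto. unfold Rdiv. rewrite Rmult_assoc, Rinv_l by lra. lra. }
      specialize (HC H2). rewrite <- Hqx, phi_at_focus, Hphq, Hphx in HC.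
      assert (r / T < 1). { apply Rmult_lt_reg_r with T; auto. unfold Rdiv. rewrite Rmult_assoc, Rinv_l by lra. lra. }
      nra.
  - intros ->. split; auto. intros z Hz. rewrite Hq'. pose proof (Hc z Hz). pose proof (F4 z). lra. Qed.

Definition Phi (a b x : R3) : R3 := vadd (U (vsub x a)) (U (vsub x b)).
Definition Hes (a b x : R3) : R3 -> R3 := fun v => vadd (DU (vsub x a) v) (DU (vsub x b) v).

Lemma sub_neq x a : x <> a -> vsub x a <> vzero.
Proof. intros H E. apply H. rewrite <- (vsub_add x a), E. veq. Qed.

Lemma phi_eq x a b : phi x a b = vnorm (vsub x a) + vnorm (vsub x b).
Proof. unfold phi. rewrite vnorm_sub_sym. reflexivity. Qed.

Lemma phi_grad a b x k : x <> a -> x <> b -> has_grad (fun z => phi z a b - k) x (Phi a b x).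
Proof. intros Ha Hb. apply has_grad_const. eapply has_grad_ext.
  apply has_grad_add; apply has_grad_norm_sub; auto. intros z. rewrite phi_eq. reflexivity. Qed.

Lemma Phi_deriv a b x : x <> a -> x <> b -> has_deriv (Phi a b) x (Hes a b x).
Proof. intros Ha Hb. unfold Phi, Hes.
  apply (has_deriv_add (fun z => U (vsub z a)) (fun z => U (vsub z b)) x (fun h => DU (vsub x a) h) (fun h => DU (vsub x b) h)).
  - apply (has_deriv_U (fun z => vsub z a) x (fun h => h)). apply has_deriv_sub_const. apply sub_neq; auto.
  - apply (has_deriv_U (fun z => vsub z b) x (fun h => h)). apply has_deriv_sub_const. apply sub_neq; auto. Qed.

Lemma DU_cont a x v : x <> a -> forall eps, 0 < eps -> exists del, 0 < del /\ forall y, vnorm (vsub y x) < del ->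
  vnorm (vsub (DU (vsub y a) v) (DU (vsub x a) v)) < eps.
Proof. intros Ha eps He. pose proof (vnorm_pos _ (sub_neq x a Ha)) as Hb. set (b := vnorm (vsub x a)) in *.
  pose proof (vnorm_ge0 v).
  set (K := 12 * vnorm v / (b * b)). assert (HK: 0 <= K) by (unfold K; apply Rdiv_le_0_compat'; nra).
  exists (Rmin (b/2) (eps / (K + 1))). split. apply Rmin_pos. lra. apply Rdiv_lt_0_compat; lra.
  intros y Hy. assert (Hy1: vnorm (vsub y x) <= b / 2) by (left; eapply Rlt_le_trans; [exact Hy| apply Rmin_l]).
  assert (Hy2: vnorm (vsub y x) < eps / (K + 1)) by (eapply Rlt_le_trans; [exact Hy| apply Rmin_r]).
  pose proof (DU_lip (vsub x a) (vsub y x) v (sub_neq x a Ha) Hy1) as HL.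
  replace (vadd (vsub x a) (vsub y x)) with (vsub y a) in HL by veq. fold b in HL.
  eapply Rle_lt_trans. exact HL.
  replace (12 * vnorm (vsub y x) * vnorm v / (b * b)) with (K * vnorm (vsub y x)) by (unfold K; field; lra).
  pose proof (vnorm_ge0 (vsub y x)).
  apply Rle_lt_trans with ((K + 1) * vnorm (vsub y x)). nra.
  apply Rmult_lt_reg_r with (/ (K+1)). apply Rinv_0_lt_compat; lra.
  replace ((K + 1) * vnorm (vsub y x) * / (K + 1)) with (vnorm (vsub y x)) by (field; lra).
  replace (eps * / (K+1)) with (eps / (K+1)) by reflexivity. lra. Qed.

Lemma Hes_cont a b (Uset : R3 -> Prop) : (forall x, Uset x -> x <> a /\ x <> b) ->
  forall v, cont_on Uset (fun x => Hes a b x v).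
Proof. intros HU v x Hx eps He. destruct (HU x Hx) as [Ha Hb].
  destruct (DU_cont a x v Ha (eps/2) ltac:(lra)) as [d1 [Hd1 H1]].
  destruct (DU_cont b x v Hb (eps/2) ltac:(lra)) as [d2 [Hd2 H2]].
  exists (Rmin d1 d2). split. apply Rmin_pos; auto. intros y Hy Hyx.
  specialize (H1 y ltac:(eapply Rlt_le_trans; [exact Hyx| apply Rmin_l])).
  specialize (H2 y ltac:(eapply Rlt_le_trans; [exact Hyx| apply Rmin_r])).
  unfold Hes. replace (vsub (vadd (DU (vsub y a) v) (DU (vsub y b) v)) (vadd (DU (vsub x a) v) (DU (vsub x b) v)))
    with (vadd (vsub (DU (vsub y a) v) (DU (vsub x a) v)) (vsub (DU (vsub y b) v) (DU (vsub x b) v))) by veq.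
  eapply Rle_lt_trans. apply vnorm_triangle. lra. Qed.

Lemma ell_level a b c q : phi q a b = c -> q <> a -> q <> b -> Phi a b q <> vzero ->
  exists rho, local_level (ellipsoid c a b) q rho (fun x => phi x a b - c) (Phi a b).
Proof. intros Hq Ha Hb Hw.
  pose proof (vnorm_pos _ (sub_neq q a Ha)) as Hra. pose proof (vnorm_pos _ (sub_neq q b Hb)) as Hrb.
  pose proof (vnorm_pos _ Hw) as Hwp.
  set (ra := vnorm (vsub q a)) in *. set (rb := vnorm (vsub q b)) in *. set (w := vnorm (Phi a b q)) in *.
  set (rho := Rmin (ra / 2) (Rmin (rb / 2) (w / (8 / ra + 8 / rb)))).
  assert (Hk: 0 < 8 / ra + 8 / rb) by (assert (0 < 8/ra) by (apply Rdiv_lt_0_compat; lra); assert (0 < 8/rb) by (apply Rdiv_lt_0_compat; lra); lra).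
  assert (Hrho: 0 < rho) by (repeat apply Rmin_pos; try apply Rdiv_lt_0_compat; lra).
  assert (Bx: forall x, ball q rho x -> vnorm (vsub x q) < ra / 2 /\ vnorm (vsub x q) < rb / 2 /\ vnorm (vsub x q) < w / (8 / ra + 8 / rb)).
  { intros x Hx. unfold ball in Hx. unfold rho in Hx. repeat split; eapply Rlt_le_trans; try exact Hx.
    apply Rmin_l. eapply Rle_trans; [apply Rmin_r| apply Rmin_l]. eapply Rle_trans; [apply Rmin_r| apply Rmin_r]. }
  assert (Hne: forall x, ball q rho x -> x <> a /\ x <> b).
  { intros x Hx. destruct (Bx x Hx) as [H1 [H2 _]]. split; apply vneq_of_norm.
    - pose proof (vnorm_sub_tri q x a). rewrite vnorm_sub_sym in H1. fold ra in H. lra.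
    - pose proof (vnorm_sub_tri q x b). rewrite vnorm_sub_sym in H2. fold rb in H. lra. }
  exists rho. split; auto. split.
  - split. intros x Hx. destruct (Hne x Hx). apply phi_grad; auto.
    exists (Hes a b). split. intros x Hx. destruct (Hne x Hx). apply Phi_deriv; auto.
    apply Hes_cont. auto.
  - split.
    + intros x Hx. destruct (Bx x Hx) as [H1 [H2 H3]].
      assert (Hd1: vnorm (vsub x q) <= vnorm (vsub q a) / 2) by (fold ra; lra).
      assert (Hd2: vnorm (vsub x q) <= vnorm (vsub q b) / 2) by (fold rb; lra).
      pose proof (U_lip _ _ (sub_neq q a Ha) Hd1) as L1. pose proof (U_lip _ _ (sub_neq q b Hb) Hd2) as L2.
      replace (vadd (vsub q a) (vsub x q)) with (vsub x a) in L1 by veq.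
      replace (vadd (vsub q b) (vsub x q)) with (vsub x b) in L2 by veq. fold ra in L1. fold rb in L2.
      intro E. assert (Hd: vnorm (vsub (Phi a b x) (Phi a b q)) < w).
      { unfold Phi. replace (vsub (vadd (U (vsub x a)) (U (vsub x b))) (vadd (U (vsub q a)) (U (vsub q b))))
          with (vadd (vsub (U (vsub x a)) (U (vsub q a))) (vsub (U (vsub x b)) (U (vsub q b)))) by veq.
        eapply Rle_lt_trans. apply vnorm_triangle.
        assert (4 * vnorm (vsub x q) / ra + 4 * vnorm (vsub x q) / rb = vnorm (vsub x q) * (8 / ra + 8 / rb) / 2) by (field; lra).
        assert (vnorm (vsub x q) * (8 / ra + 8 / rb) < w).
        { apply Rmult_lt_reg_r with (/ (8 / ra + 8 / rb)). apply Rinv_0_lt_compat; lra.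
          replace (vnorm (vsub x q) * (8 / ra + 8 / rb) * / (8 / ra + 8 / rb)) with (vnorm (vsub x q)) by (field; lra). exact H3. }
        lra. }
      rewrite E in Hd. replace (vsub vzero (Phi a b q)) with (vscal (-1) (Phi a b q)) in Hd by veq.
      rewrite vnorm_opp in Hd. fold w in Hd. lra.
    + intros x Hx. unfold ellipsoid. lra. Qed.

Lemma tau_phi a b q v : tau (Phi a b) (Hes a b q) q (-1) v =
  (dot (DU (vsub q a) v) v + dot (DU (vsub q b) v) v) / (2 * vnorm (Phi a b q)).
Proof. unfold tau, Hes. rewrite dot_addl. unfold Rdiv. ring. Qed.

Lemma DU_quad y v : y <> vzero -> dot (DU y v) v = (dot v v - dot (U y) v * dot (U y) v) / vnorm y.
Proof. intros H. pose proof (vnorm_pos y H). rewrite DU_alt by auto. rewrite dot_scall, dot_subl, dot_scall.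
  unfold Rdiv. ring. Qed.

Lemma U_scale l y : 0 < l -> U (vscal l y) = U y.
Proof. intros Hl. unfold U. rewrite vnorm_scal, Rabs_pos_eq by lra.
  destruct (Req_dec (vnorm y) 0) as [E|E].
  - rewrite E, Rmult_0_r, Rinv_0. veq.
  - vsplit; field; lra. Qed.

Lemma DU_scale l y v : 0 < l -> y <> vzero -> DU (vscal l y) v = vscal (/ l) (DU y v).
Proof. intros Hl Hy. pose proof (vnorm_pos y Hy).
  assert (vscal l y <> vzero). { intro E. apply Hy. rewrite <- (vscal_inv l y) by lra. rewrite E. veq. }
  rewrite !DU_alt by auto. rewrite U_scale by auto. rewrite vnorm_scal, Rabs_pos_eq by lra.
  rewrite vscal_assoc. f_equal. field. lra. Qed.

Lemma U_mul y : y <> vzero -> vscal (vnorm y) (U y) = y.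
Proof. intros H. pose proof (vnorm_pos y H). unfold U. rewrite vscal_assoc.
  replace (vnorm y * / vnorm y) with 1 by (field; lra). veq. Qed.

Lemma Phi_zero_seg p p' q : q <> p -> q <> p' -> Phi p p' q = vzero -> segment p p' q.
Proof. intros H1 H2 HZ. apply on_segment.
  pose proof (sub_neq q p H1) as Y1. pose proof (sub_neq q p' H2) as Y2.
  set (u1 := U (vsub q p)). set (u2 := U (vsub q p')).
  assert (Hu2: u2 = vscal (-1) u1).
  { unfold Phi in HZ. fold u1 u2 in HZ. rewrite <- (vadd_sub_l u1 u2), HZ. clearbody u1 u2. veq. }
  assert (E: vsub p p' = vscal (- (vnorm (vsub q p) + vnorm (vsub q p'))) u1).
  { assert (Q1: vsub q p = vscal (vnorm (vsub q p)) u1) by (symmetry; apply U_mul; auto).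
    assert (Q2: vsub q p' = vscal (vnorm (vsub q p')) u2) by (symmetry; apply U_mul; auto).
    replace (vsub p p') with (vsub (vsub q p') (vsub q p)) by veq.
    rewrite Q2 at 1. rewrite Q1 at 1. rewrite Hu2. clearbody u1 u2.
    generalize (vnorm (vsub q p)) (vnorm (vsub q p')). intros. veq. }
  rewrite E, vnorm_scal. unfold u1. rewrite U_norm by auto.
  rewrite (vnorm_sub_sym p q). pose proof (vnorm_ge0 (vsub q p)). pose proof (vnorm_ge0 (vsub q p')).
  rewrite Rabs_left1 by lra. ring. Qed.

Lemma POS u1 u2 v : vnorm u1 = 1 -> vnorm u2 = 1 -> vadd u1 u2 <> vzero -> v <> vzero ->
  dot (vadd u1 u2) v = 0 -> 0 < dot v v - dot u2 v * dot u2 v.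
Proof. intros H1 H2 Hw Hv Hwv.
  assert (Hq: dot (vsub v (vscal (dot u2 v) u2)) (vsub v (vscal (dot u2 v) u2)) = dot v v - dot u2 v * dot u2 v).
  { rewrite !dot_subl, !dot_subr, !dot_scall, !dot_scalr, <- (vnorm_sq u2), H2, (dot_comm v u2). ring. }
  pose proof (dot_ge0 (vsub v (vscal (dot u2 v) u2))). rewrite Hq in H.
  destruct H as [H|H]; auto. exfalso. symmetry in H. rewrite <- Hq in H. apply dot_eq0 in H.
  assert (Hv2: v = vscal (dot u2 v) u2). { rewrite <- (vsub_add v (vscal (dot u2 v) u2)) at 1. rewrite H. generalize (vscal (dot u2 v) u2). intros. veq. }
  assert (Hd: dot u2 v <> 0). { intro E. apply Hv. rewrite Hv2, E. veq. }
  rewrite Hv2, dot_scalr, dot_addl in Hwv.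
  assert (dot u1 u2 + dot u2 u2 = 0). { apply Rmult_integral in Hwv. destruct Hwv; auto. contradiction. }
  apply Hw. apply dot_eq0. rewrite dot_vadd_self, <- (vnorm_sq u1), <- (vnorm_sq u2), H1, H2.
  rewrite <- (vnorm_sq u2), H2 in H0. lra. Qed.

Lemma NORMAL (D : R3 -> Prop) p p' c q r0 F0 G0 L0 rho :
  ~ closure D p -> (forall z, boundary D z -> c <= phi z p p') -> vnorm (vsub p p') <= c ->
  local_def_fn D q r0 F0 G0 -> sdata F0 G0 L0 q r0 (vscal (/ vnorm (G0 q)) (G0 q)) 1 ->
  sdata (fun x => phi x p p' - c) (Phi p p') (Hes p p' q) q rho (vscal (-1 / vnorm (Phi p p' q)) (Phi p p' q)) (-1) ->
  vscal (/ vnorm (G0 q)) (G0 q) = vscal (-1 / vnorm (Phi p p' q)) (Phi p p' q).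
Proof. intros Hp Hc Hpp Hldf Hs0 HsE.
  pose proof (ldf_ll D q r0 F0 G0 Hldf) as Hll0.
  pose proof Hs0 as (Hr0 & Hg0 & HD0 & HF0 & Hnz0 & _ & _).
  pose proof HsE as (HrE & HgE & HDE & HFE & HnzE & _ & _).
  set (g := G0 q) in *. set (w := Phi p p' q) in *.
  assert (Hpar: forall v, dot g v = 0 -> dot w v = 0).
  { intros v Hv. assert (1 * dot w v = 0).
    { eapply (PAR F0 G0 L0 r0 1 _ q v (fun x => phi x p p' - c) (Phi p p') (Hes p p' q) rho 1 Hs0 Hv HrE HgE HDE HFE).
      exists r0. split; auto. intros x Hx Hf.
      destruct Hll0 as (_ & _ & _ & HM). apply HM in Hf; auto. specialize (Hc x Hf). lra. }
    lra. }
  pose proof (vnorm_pos _ Hnz0) as Hgp. fold g in Hgp.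
  assert (Hgg: 0 < dot g g) by (rewrite <- vnorm_sq; nra).
  set (lam := dot g w / dot g g).
  assert (Hwl: w = vscal lam g).
  { set (v := vsub w (vscal lam g)).
    assert (Hgv: dot g v = 0) by (unfold v, lam; rewrite dot_subr, dot_scalr; field; lra).
    assert (Hvv: dot v v = 0).
    { pose proof (Hpar v Hgv). unfold v at 1. rewrite dot_subl, dot_scall, Hgv, H. ring. }
    apply dot_eq0 in Hvv. rewrite <- (vsub_add w (vscal lam g)). fold v. rewrite Hvv. veq. }
  assert (Hlam0: lam <> 0). { intro E. apply HnzE. fold w. rewrite Hwl, E. veq. }
  assert (Hlam: lam < 0).
  { destruct (Rtotal_order lam 0) as [|[|Hpos]]; try lra; exfalso.
    destruct (taylor1 F0 G0 L0 q r0 Hr0 Hg0 HD0) as [K0 [d0 [HK0 [Hd0 HT0]]]].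
    destruct (taylor1 (fun x => phi x p p' - c) (Phi p p') (Hes p p' q) q rho HrE HgE HDE) as [K1 [d1 [HK1 [Hd1 HT1]]]].
    set (g2 := vnorm g * vnorm g) in *.
    assert (Hg2: 0 < g2) by (unfold g2; nra).
    set (t := Rmin (Rmin (d0 / (2 * vnorm g)) (d1 / (2 * vnorm g))) (Rmin (r0 / (2 * vnorm g)) (Rmin (/ (2 * (K0 + 1))) (lam / (2 * (K1 + 1)))))).
    assert (Ht: 0 < t) by (repeat apply Rmin_pos; try apply Rdiv_lt_0_compat; try apply Rinv_0_lt_compat; lra).
    assert (T1: t <= d0 / (2 * vnorm g)) by (unfold t; eapply Rle_trans; [apply Rmin_l| apply Rmin_l]).
    assert (T2: t <= d1 / (2 * vnorm g)) by (unfold t; eapply Rle_trans; [apply Rmin_l| apply Rmin_r]).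
    assert (T3: t <= r0 / (2 * vnorm g)) by (unfold t; eapply Rle_trans; [apply Rmin_r| apply Rmin_l]).
    assert (T4: t <= / (2 * (K0 + 1))) by (unfold t; eapply Rle_trans; [apply Rmin_r|]; eapply Rle_trans; [apply Rmin_r| apply Rmin_l]).
    assert (T5: t <= lam / (2 * (K1 + 1))) by (unfold t; eapply Rle_trans; [apply Rmin_r|]; eapply Rle_trans; [apply Rmin_r| apply Rmin_r]).
    set (h := vscal (- t) g).
    assert (Hh: vnorm h = t * vnorm g) by (unfold h; rewrite vnorm_scal, Rabs_left by lra; ring).
    assert (Hlt: forall d, t <= d / (2 * vnorm g) -> 0 < d -> vnorm h < d).
    { intros d Htd Hd. rewrite Hh. apply Rle_lt_trans with (d / 2). 
      apply Rmult_le_reg_r with (/ vnorm g). apply Rinv_0_lt_compat; lra.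
      replace (t * vnorm g * / vnorm g) with t by (field; lra). replace (d / 2 * / vnorm g) with (d / (2 * vnorm g)) by (field; lra). lra. lra. }
    specialize (HT0 h (Hlt d0 T1 Hd0)). specialize (HT1 h (Hlt d1 T2 Hd1)).
    rewrite HF0 in HT0. rewrite HFE in HT1. fold g in HT0. fold w in HT1.
    rewrite Hh in HT0, HT1.
    assert (Edg: dot g h = - t * g2) by (unfold h, g2; rewrite dot_scalr, <- vnorm_sq; ring).
    assert (Edw: dot w h = - t * lam * g2) by (rewrite Hwl; unfold h, g2; rewrite dot_scall, dot_scalr, <- vnorm_sq; ring).
    rewrite Edg in HT0. rewrite Edw in HT1.
    apply abs_bounds in HT0. apply abs_bounds in HT1.
    assert (HF0neg: F0 (vadd q h) < 0).
    { assert (K0 * (t * vnorm g * (t * vnorm g)) = (K0 * t) * t * g2) by (unfold g2; ring).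
      assert (K0 * t <= / 2).
      { apply Rle_trans with ((K0 + 1) * t). nra. apply Rmult_le_reg_r with (/ (K0+1)). apply Rinv_0_lt_compat; lra.
        replace ((K0 + 1) * t * / (K0 + 1)) with t by (field; lra). replace (/ 2 * / (K0 + 1)) with (/ (2 * (K0 + 1))) by (field; lra). lra. }
      assert (K0 * t * t * g2 <= / 2 * t * g2) by (apply Rmult_le_compat_r; [lra|]; apply Rmult_le_compat_r; lra).
      assert (0 < t * g2) by nra. lra. }
    assert (Hball: ball q r0 (vadd q h)).
    { unfold ball. rewrite vadd_sub_cancel. apply Hlt; auto. }
    destruct Hldf as (_ & _ & _ & HDf).
    assert (HDq: D (vadd q h)) by (apply HDf; auto).
    pose proof (closure_phi D p p' c _ Hp Hc Hpp (in_closure D _ HDq)).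
    assert (K1 * (t * vnorm g * (t * vnorm g)) = (K1 * t) * t * g2) by (unfold g2; ring).
    assert (K1 * t <= lam / 2).
    { apply Rle_trans with ((K1 + 1) * t). nra. apply Rmult_le_reg_r with (/ (K1+1)). apply Rinv_0_lt_compat; lra.
      replace ((K1 + 1) * t * / (K1 + 1)) with t by (field; lra). replace (lam / 2 * / (K1 + 1)) with (lam / (2 * (K1 + 1))) by (field; lra). lra. }
    assert (K1 * t * t * g2 <= lam / 2 * t * g2) by (apply Rmult_le_compat_r; [lra|]; apply Rmult_le_compat_r; lra).
    assert (0 < lam * t * g2) by (apply Rmult_lt_0_compat; nra).
    nra. }
  rewrite Hwl, vnorm_scal, Rabs_left by lra. rewrite vscal_assoc. f_equal. field. lra. Qed.

Theorem proposition5p2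
  (D : R3 -> Prop) (p p' : R3) (eta' c s : R) (q : R3)
  (HDne : exists x, D x) (HDbd : is_bounded D) (HDop : is_open D)
  (HDC2 : C2_boundary D)
  (Hp : ~ closure D p) (Hp' : ~ closure D p')
  (Hseg : forall x, segment p p' x -> ~ closure D x)
  (Heta : 0 < eta')
  (HB' : forall x, closed_ball p' eta' x -> ~ closure D x)
  (Hc : (exists x, boundary D x /\ phi x p p' = c) /\
        (forall x, boundary D x -> c <= phi x p p'))
  (Hs : 0 < s < eta')
  (Hq : Lambda D p p' q) :
  let A' := vscal (/ vnorm (vsub q p')) (vsub q p') in
  let p's := vadd p' (vscal s A') in
  (forall x, Lambda D p p's x <-> x = q) /\
  (s < / 2 * (c - vnorm (vsub p p')) ->
   forall n, outward_normal D q n ->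
     (forall v, tangent_plane (boundary D) q v <->
                tangent_plane (ellipsoid (c - s) p p's) q v) /\
     (forall v, tangent_plane (ellipsoid (c - s) p p's) q v <->
                tangent_plane (ellipsoid c p p') q v) /\
     (exists S1, shape_op (ellipsoid (c - s) p p's) q n S1) /\
     (exists S2, shape_op (boundary D) q n S2) /\
     (forall S1 S2, shape_op (ellipsoid (c - s) p p's) q n S1 ->
        shape_op (boundary D) q n S2 ->
        forall v, tangent_plane (boundary D) q v -> v <> vzero ->
          0 < dot (vsub (S1 v) (S2 v)) v)).
Proof.
  intros A' p's.
  destruct Hc as [[x0 [Hx0b Hx0c]] Hcmin].
  pose proof Hq as [Hqb Hqmin].
  assert (Hphq: phi q p p' = c) by (specialize (Hqmin x0 Hx0b); specialize (Hcmin q Hqb); lra).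
  assert (Hqcl: closure D q) by (destruct Hqb; auto).
  assert (Hcge: vnorm (vsub p p') <= c) by (rewrite <- Hphq; apply phi_lower).
  assert (Hcgt: vnorm (vsub p p') < c).
  { destruct Hcge as [|E]; auto. exfalso. apply (Hseg q); auto. apply on_segment. unfold phi in Hphq. lra. }
  assert (Hr: eta' < vnorm (vsub q p')).
  { apply Rnot_le_lt. intro H. apply (HB' q); auto. }
  assert (Hs': 0 < s < vnorm (vsub q p')) by lra.
  destruct (ps_facts p' q s Hs') as (E1 & E2 & E3 & E4). fold A' p's in E1, E2, E3, E4.
  split.
  { exact (lambda_part D p p' c s q Hcmin Hcgt Hqb Hphq Hs'). }
  intros Hs2 n Hn.
  assert (Hqp: q <> p) by (intro E; apply Hp; rewrite <- E; auto).
  assert (Hqp': q <> p') by (intro E; apply Hp'; rewrite <- E; auto).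
  assert (Hqps: q <> p's) by (apply vneq_of_norm; rewrite E2; lra).
  assert (Hw: Phi p p' q <> vzero) by (intro Z; apply (Hseg q (Phi_zero_seg p p' q Hqp Hqp' Z)); auto).
  set (r := vnorm (vsub q p')) in *.
  set (lam := (r - s) / r).
  assert (Hlam: 0 < lam < 1).
  { unfold lam. split. apply Rdiv_lt_0_compat; lra. apply Rmult_lt_reg_r with r. lra.
    unfold Rdiv. rewrite Rmult_assoc, Rinv_l by lra. lra. }
  assert (Hww: Phi p p's q = Phi p p' q) by (unfold Phi; rewrite E1; fold lam; rewrite U_scale by lra; reflexivity).
  assert (Hphq': phi q p p's = c - s) by (unfold phi in *; rewrite E2; fold r in Hphq; lra).
  assert (Hw': Phi p p's q <> vzero) by (rewrite Hww; auto).
  destruct (ell_level p p' c q Hphq Hqp Hqp' Hw) as [rho HllE].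
  destruct (ell_level p p's (c - s) q Hphq' Hqp Hqps Hw') as [rho' HllE'].
  set (nE := vscal (-1 / vnorm (Phi p p' q)) (Phi p p' q)).
  assert (HsE: sdata (fun x => phi x p p' - c) (Phi p p') (Hes p p' q) q rho nE (-1)).
  { pose proof HllE as (Hrho & [Hg _] & Hnz & HM).
    refine (conj Hrho (conj Hg (conj (Phi_deriv p p' q Hqp Hqp') (conj _ (conj Hw (conj (or_intror eq_refl) eq_refl)))))).
    simpl. lra. }
  assert (HsE': sdata (fun x => phi x p p's - (c - s)) (Phi p p's) (Hes p p's q) q rho' nE (-1)).
  { pose proof HllE' as (Hrho & [Hg _] & Hnz & HM).
    refine (conj Hrho (conj Hg (conj (Phi_deriv p p's q Hqp Hqps) (conj _ (conj Hw' (conj (or_intror eq_refl) _)))))).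
    simpl. lra. unfold nE. rewrite Hww. reflexivity. }
  destruct Hn as [_ [r0 [F0 [G0 [Hldf Hn0]]]]].
  pose proof (ldf_ll D q r0 F0 G0 Hldf) as Hll0.
  destruct (ll_sdata (boundary D) q r0 F0 G0 1 Hll0 Hqb (or_introl eq_refl)) as [L0 [Hs0 _]].
  assert (Hn1: vscal (1 / vnorm (G0 q)) (G0 q) = n) by (rewrite Hn0; f_equal; unfold Rdiv; ring).
  rewrite Hn1 in Hs0.
  assert (HnE: n = nE).
  { rewrite Hn0. apply (NORMAL D p p' c q r0 F0 G0 L0 rho Hp Hcmin Hcge Hldf). rewrite <- Hn0. auto. auto. }
  rewrite <- HnE in HsE, HsE'.
  pose proof (TP _ _ _ _ _ _ _ _ Hs0 Hll0) as TPb.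
  pose proof (TP _ _ _ _ _ _ _ _ HsE HllE) as TPE.
  pose proof (TP _ _ _ _ _ _ _ _ HsE' HllE') as TPE'.
  split; [| split; [| split; [| split]]].
  - intros v. rewrite TPb, TPE'. tauto.
  - intros v. rewrite TPE, TPE'. tauto.
  - destruct (shape_exists _ q rho' _ _ (-1) HllE' Hphq' (or_intror eq_refl)) as [S HS].
    exists S. replace n with (vscal (-1 / vnorm (Phi p p's q)) (Phi p p's q)); auto.
    rewrite HnE. unfold nE. rewrite Hww. reflexivity.
  - destruct (shape_exists _ q r0 _ _ 1 Hll0 Hqb (or_introl eq_refl)) as [S HS].
    exists S. rewrite <- Hn1. auto.
  - intros S1 S2 HS1 HS2 v Hv Hv0.
    destruct (shape_val _ _ _ _ HS1) as [F1 [G1 [L1 [r1 [sg1 [Hl1 [Hsd1 Hf1]]]]]]].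
    destruct (shape_val _ _ _ _ HS2) as [F2 [G2 [L2 [r2 [sg2 [Hl2 [Hsd2 Hf2]]]]]]].
    assert (Hnv: dot n v = 0) by (apply TPb; auto).
    assert (Hv1: dot (G1 q) v = 0) by exact (sdata_tangent _ _ _ _ _ _ _ v Hsd1 Hnv).
    assert (Hv2: dot (G2 q) v = 0) by exact (sdata_tangent _ _ _ _ _ _ _ v Hsd2 Hnv).
    assert (Hv0': dot (G0 q) v = 0) by exact (sdata_tangent _ _ _ _ _ _ _ v Hs0 Hnv).
    rewrite dot_subl, Hf1, Hf2 by auto.
    rewrite (SAME _ _ _ _ _ _ _ _ _ _ _ _ _ _ Hl1 Hsd1 HllE' HsE' Hnv).
    rewrite (SAME _ _ _ _ _ _ _ _ _ _ _ _ _ _ Hl2 Hsd2 Hll0 Hs0 Hnv).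
    assert (HO: tau G0 L0 q 1 v <= tau (Phi p p') (Hes p p' q) q (-1) v).
    { apply (ONE F0 G0 L0 r0 1 (fun x => phi x p p' - c) (Phi p p') (Hes p p' q) rho (-1) q n v Hs0 HsE Hv0').
      exists r0. split. destruct Hs0; auto. intros x Hx Hf.
      destruct Hll0 as (_ & _ & _ & HM). apply HM in Hf; auto. specialize (Hcmin x Hf). lra. }
    assert (Hwv: dot (Phi p p' q) v = 0).
    { rewrite HnE in Hnv. unfold nE in Hnv. rewrite dot_scall in Hnv. pose proof (vnorm_pos _ Hw).
      apply Rmult_integral in Hnv. destruct Hnv as [Z|Z]; auto. exfalso. unfold Rdiv in Z.
      apply Rmult_integral in Z. destruct Z as [Z|Z]. lra. apply Rinv_neq_0_compat in Z; auto. lra. }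
    assert (Hyp: vsub q p' <> vzero) by (apply sub_neq; auto).
    assert (Hyq: vsub q p <> vzero) by (apply sub_neq; auto).
    pose proof (POS (U (vsub q p)) (U (vsub q p')) v (U_norm _ Hyq) (U_norm _ Hyp) Hw Hv0 Hwv) as HPOS.
    rewrite !tau_phi in *. rewrite Hww, E1. fold lam. rewrite DU_scale by (auto; lra). rewrite dot_scall.
    set (Y := dot (DU (vsub q p) v) v) in *. set (W := vnorm (Phi p p' q)) in *.
    rewrite (DU_quad (vsub q p') v Hyp) in HO |- *.
    pose proof (vnorm_pos _ Hw). pose proof (vnorm_pos _ Hyp). fold W in H.
    set (X := (dot v v - dot (U (vsub q p')) v * dot (U (vsub q p')) v) / vnorm (vsub q p')) in *.
    assert (HX: 0 < X) by (unfold X; apply Rdiv_lt_0_compat; lra).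
    assert (Hl: 1 < / lam). { rewrite <- Rinv_1. apply Rinv_lt_contravar; lra. }
    assert (Y / (2 * W) + X / (2 * W) < (Y + / lam * X) / (2 * W)).
    { unfold Rdiv. rewrite <- Rmult_plus_distr_r. apply Rmult_lt_compat_r. apply Rinv_0_lt_compat; lra. nra. }
    replace ((Y + X) / (2 * W)) with (Y / (2 * W) + X / (2 * W)) in HO by (field; lra).
    lra.
Qed.
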